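(* Assume $A_n$ satisfies (C1), the mean field condition $\lim_{n\to\infty}\frac1n\sum_{i,j=1}^nA_n(i,j)^2=0$, and the irregularity condition $$\liminf_{n\to\infty}\frac1n\sum_{i=1}^n\big(\mathcal R_n(i)-\overline{\mathcal R}_n\big)^2>0.$$ Then for every $(\beta,B)\in\Theta$, under $\mathbb P_{n,\beta,B}$ we have $T_n(\mathbf X)=\Theta_p(1)$. Consequently, with probability tending to one the pseudo-likelihood estimator exists and $(\hat\beta_n-\beta)^2+(\hat B_n-B)^2=O_p(1/n)$.
   Context: For each $n$, $A_n$ is a known symmetric $n\times n$ matrix with non-negative entries and zero diagonal. The Ising model is $\mathbb P_{n,\beta,B}(\mathbf X=\mathbf x)=Z_n(\beta,B)^{-1}\exp(\frac{\beta}{2}\mathbf x^\top A_n\mathbf x+B\sum_i x_i)$ on $\{-1,1\}^n$. (C1): there is a constant $\gamma<\infty$ with $\max_{i}\sum_{j}A_n(i,j)\le\gamma$ for all $n$. $\Theta=\{(\beta,B):\beta>0,B\ne0\}$. $\mathcal R_n(i)=\sum_{j=1}^nA_n(i,j)$ (row sums), $\overline{\mathcal R}_n=\frac1n\sum_i\mathcal R_n(i)$. $m_i(\mathbf x)=\sum_jA_n(i,j)x_j$, $\bar m(\mathbf x)=\frac1n\sum_i m_i(\mathbf x)$, $T_n(\mathbf x)=\frac1n\sum_i(m_i(\mathbf x)-\bar m(\mathbf x))^2$. The pseudo-likelihood estimator $(\hat\beta_n,\hat B_n)$ is the unique root in $\mathbb R^2$ of $\sum_i m_i(\mathbf x)(x_i-\tanh(\beta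 m_i(\mathbf x)+B))=0$, $\sum_i(x_i-\tanh(\beta m_i(\mathbf x)+B))=0$, when it exists. $U_n=O_p(V_n)$ means $U_n/V_n$ is tight; $U_n=\Theta_p(V_n)$ means $U_n=O_p(V_n)$ and $V_n=O_p(U_n)$. *)

(* Defs.v *)
From Stdlib Require Import Reals Lra List ClassicalEpsilon.
Open Scope R_scope.

(* A coupling sequence: A n i j is the (i,j) entry of the n x n matrix A_n,
   meaningful for i, j < n (0-based indices). *)
Definition coupling := nat -> nat -> nat -> R.

Definition rsum (n : nat) (f : nat -> R) : R :=
  fold_right (fun i acc => f i + acc) 0 (List.seq 0 n).

(* spin configurations: x : nat -> R, only x 0 .. x (n-1) matter *)
Definition upd (x : nat -> R) (k : nat) (v : R) : nat -> R :=
  fun i => if Nat.eqb i k then v else x i.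

(* list of all 2^n configurations in {-1,1}^n (coordinates >= n set to 0) *)
Fixpoint configs (n : nat) : list (nat -> R) :=
  match n with
  | O => (fun _ => 0) :: nil
  | S k => flat_map (fun x => upd x k 1 :: upd x k (-1) :: nil) (configs k)
  end.

Definition lsum {T} (l : list T) (f : T -> R) : R :=
  fold_right (fun t acc => f t + acc) 0 l.

Definition weight (A : coupling) (n : nat) (beta B : R) (x : nat -> R) : R :=
  exp (beta / 2 * rsum n (fun i => rsum n (fun j => A n i j * x i * x j))
       + B * rsum n (fun i => x i)).

Definition Zpart (A : coupling) (n : nat) (beta B : R) : R :=
  lsum (configs n) (weight A n beta B).

Definition ind (P : Prop) : R :=
  if excluded_middle_informative P then 1 else 0.

Definition Prob (A : coupling) (n : nat) (beta B : R) (E : (nat -> R) -> Prop) : R :=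
  lsum (configs n) (fun x => ind (E x) * weight A n beta B x) / Zpart A n beta B.

Definition rowsum (A : coupling) (n i : nat) : R := rsum n (fun j => A n i j).
Definition rowsum_mean (A : coupling) (n : nat) : R := rsum n (rowsum A n) / INR n.

Definition mloc (A : coupling) (n i : nat) (x : nat -> R) : R :=
  rsum n (fun j => A n i j * x j).
Definition mbar (A : coupling) (n : nat) (x : nat -> R) : R :=
  rsum n (fun i => mloc A n i x) / INR n.
Definition Tn (A : coupling) (n : nat) (x : nat -> R) : R :=
  rsum n (fun i => (mloc A n i x - mbar A n x) ^ 2) / INR n.

Definition PL_root (A : coupling) (n : nat) (x : nat -> R) (b c : R) : Prop :=
  rsum n (fun i => mloc A n i x * (x i - tanh (b * mloc A n i x + c))) = 0 /\
  rsum n (fun i => x i - tanh (b * mloc A n i x + c)) = 0.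

Definition is_PLE (A : coupling) (n : nat) (x : nat -> R) (b c : R) : Prop :=
  PL_root A n x b c /\ forall b' c', PL_root A n x b' c' -> b' = b /\ c' = c.

Definition PLE_exists (A : coupling) (n : nat) (x : nat -> R) : Prop :=
  exists b c, is_PLE A n x b c.

Definition valid_coupling (A : coupling) : Prop :=
  forall n i j, (i < n)%nat -> (j < n)%nat ->
    A n i j = A n j i /\ 0 <= A n i j /\ A n i i = 0.

Definition cond_C1 (A : coupling) : Prop :=
  exists gamma : R, forall n i, (i < n)%nat -> rowsum A n i <= gamma.

Definition mean_field (A : coupling) : Prop :=
  Un_cv (fun n => rsum n (fun i => rsum n (fun j => (A n i j) ^ 2)) / INR n) 0.

Definition irregular (A : coupling) : Prop :=
  exists c, 0 < c /\ exists N, forall n, (N <= n)%nat ->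
    c <= rsum n (fun i => (rowsum A n i - rowsum_mean A n) ^ 2) / INR n.

(* Main.v *)
Require Import Defs.
From Stdlib Require Import Reals Lra Lia List Psatz ClassicalEpsilon FunctionalExtensionality.
Require Import Stdlib.Reals.Ranalysis5.
Import Defs.
Open Scope R_scope.

Lemma rsum_0 f : rsum 0 f = 0.
Proof. reflexivity. Qed.

Lemma rsum_S n f : rsum (S n) f = rsum n f + f n.
Proof.
  unfold rsum. rewrite seq_S, fold_right_app. simpl.
  generalize (f n). intros a.
  induction (seq 0 n) as [|h t IH]; simpl; [lra|]. rewrite IH. lra.
Qed.

Lemma rsum_ext n f g : (forall i, (i < n)%nat -> f i = g i) -> rsum n f = rsum n g.
Proof.
  induction n; intros H; [reflexivity|]. rewrite !rsum_S, IHn by (intros; apply H; lia).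
  rewrite H by lia. reflexivity.
Qed.

Lemma rsum_plus n f g : rsum n (fun i => f i + g i) = rsum n f + rsum n g.
Proof. induction n; [simpl; unfold rsum; simpl; lra|]. rewrite !rsum_S, IHn. lra. Qed.

Lemma rsum_scal n c f : rsum n (fun i => c * f i) = c * rsum n f.
Proof. induction n; [unfold rsum; simpl; lra|]. rewrite !rsum_S, IHn. lra. Qed.

Lemma rsum_scal_r n c f : rsum n (fun i => f i * c) = rsum n f * c.
Proof. induction n; [unfold rsum; simpl; lra|]. rewrite !rsum_S, IHn. lra. Qed.

Lemma rsum_minus n f g : rsum n (fun i => f i - g i) = rsum n f - rsum n g.
Proof. induction n; [unfold rsum; simpl; lra|]. rewrite !rsum_S, IHn. lra. Qed.

Lemma rsum_const n c : rsum n (fun _ => c) = INR n * c.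
Proof. induction n; [unfold rsum; simpl; lra|]. rewrite rsum_S, IHn, S_INR. lra. Qed.

Lemma rsum_le n f g : (forall i, (i < n)%nat -> f i <= g i) -> rsum n f <= rsum n g.
Proof.
  induction n; intros H; [unfold rsum; simpl; lra|]. rewrite !rsum_S.
  assert (rsum n f <= rsum n g) by (apply IHn; intros; apply H; lia).
  specialize (H n ltac:(lia)). lra.
Qed.

Lemma rsum_nonneg n f : (forall i, (i < n)%nat -> 0 <= f i) -> 0 <= rsum n f.
Proof.
  intros H. replace 0 with (rsum n (fun _ => 0)).
  apply rsum_le; auto. rewrite rsum_const. lra.
Qed.

Lemma rsum_abs n f : Rabs (rsum n f) <= rsum n (fun i => Rabs (f i)).
Proof.
  induction n; [unfold rsum; simpl; rewrite Rabs_R0; lra|]. rewrite !rsum_S.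
  eapply Rle_trans; [apply Rabs_triang|]. lra.
Qed.

Lemma rsum_delta n j a : (j < n)%nat ->
  rsum n (fun i => if Nat.eqb i j then a i else 0) = a j.
Proof.
  induction n; intros H; [lia|]. rewrite rsum_S.
  destruct (Nat.eq_dec j n).
  - subst. rewrite Nat.eqb_refl.
    rewrite (rsum_ext n _ (fun _ => 0)). rewrite rsum_const. lra.
    intros i Hi. destruct (Nat.eqb_spec i n); [lia|auto].
  - rewrite IHn by lia. destruct (Nat.eqb_spec n j); [lia|lra].
Qed.

Lemma rsum_swap n m f : rsum n (fun i => rsum m (fun j => f i j)) =
  rsum m (fun j => rsum n (fun i => f i j)).
Proof.
  induction n.
  - unfold rsum at 1. simpl. rewrite (rsum_ext m _ (fun _ => 0)) by (intros; reflexivity).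
    rewrite rsum_const. lra.
  - rewrite rsum_S, IHn, <- rsum_plus. apply rsum_ext. intros. rewrite rsum_S. reflexivity.
Qed.

Lemma rsum_split n j f : (j < n)%nat ->
  rsum n f = f j + rsum n (fun i => if Nat.eqb i j then 0 else f i).
Proof.
  intros H. rewrite <- (rsum_delta n j f H). rewrite <- rsum_plus.
  apply rsum_ext. intros i _. destruct (Nat.eqb i j); lra.
Qed.

Lemma rsum_cs n a b : (forall i, (i < n)%nat -> 0 <= a i) ->
  (rsum n (fun i => a i * b i))^2 <= rsum n a * rsum n (fun i => a i * b i ^ 2).
Proof.
  intros Ha. set (s := rsum n a). set (t := rsum n (fun i => a i * b i)).
  assert (Hs : 0 <= s) by (apply rsum_nonneg; auto).
  destruct (Req_dec s 0) as [Hs0|Hs0].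
  - assert (Hz : forall i, (i < n)%nat -> a i = 0).
    { intros i Hi. assert (0 <= a i) by auto.
      assert (a i <= s).
      { unfold s. rewrite (rsum_split n i a Hi).
        assert (0 <= rsum n (fun k => if Nat.eqb k i then 0 else a k)).
        { apply rsum_nonneg. intros k Hk. destruct (Nat.eqb k i); [lra|auto]. }
        lra. }
      lra. }
    assert (t = 0).
    { unfold t. rewrite (rsum_ext n _ (fun _ => 0)). rewrite rsum_const; lra.
      intros i Hi. rewrite Hz; auto; lra. }
    rewrite H, Hs0. simpl. lra.
  - assert (Hp : 0 <= rsum n (fun i => a i * (b i - t / s) ^ 2)).
    { apply rsum_nonneg. intros i Hi. apply Rmult_le_pos; [apply Ha; auto| apply pow2_ge_0]. }
    rewrite (rsum_ext n _ (fun i => a i * b i ^ 2 + (-2 * (t/s)) * (a i * b i) + (t/s)^2 * a i))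
      in Hp by (intros; ring).
    rewrite !rsum_plus, !rsum_scal in Hp. fold s t in Hp.
    assert (0 < s) by lra.
    set (q := rsum n (fun i => a i * b i ^ 2)) in *.
    replace (q + -2 * (t / s) * t + (t / s) ^ 2 * s) with ((s * q - t * t)/s) in Hp
      by (field; auto).
    assert (0 <= s * q - t*t).
    { replace (s*q - t*t) with (s * ((s * q - t * t)/s)) by (field; auto).
      apply Rmult_le_pos; lra. }
    simpl. lra.
Qed.

Lemma var_min n v k : (0 < n)%nat ->
  rsum n (fun i => (v i - rsum n v / INR n) ^ 2) <= rsum n (fun i => (v i - k) ^ 2).
Proof.
  intros Hn. set (mu := rsum n v / INR n).
  assert (HN : 0 < INR n) by (apply lt_0_INR; lia).
  rewrite (rsum_ext n (fun i => (v i - k)^2)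
     (fun i => (v i - mu)^2 + (2*(mu - k)) * (v i) + (k^2 - mu^2)))
    by (intros; ring).
  rewrite !rsum_plus, rsum_scal, rsum_const.
  replace (rsum n v) with (mu * INR n) by (unfold mu; field; lra).
  assert (0 <= 2 * (mu - k) * (mu * INR n) + INR n * (k ^ 2 - mu ^ 2)).
  { replace (2 * (mu - k) * (mu * INR n) + INR n * (k ^ 2 - mu ^ 2)) with
      (INR n * (mu - k)^2) by ring. apply Rmult_le_pos; [lra|apply pow2_ge_0]. }
  lra.
Qed.

Lemma tanh_exp y : tanh y = (exp (2*y) - 1) / (exp (2*y) + 1).
Proof.
  unfold tanh, sinh, cosh. replace (2*y) with (y + y) by ring.
  rewrite exp_plus, exp_Ropp. assert (0 < exp y) by apply exp_pos.
  field. split; [nra|lra].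
Qed.

Lemma tanh_bound y : -1 < tanh y < 1.
Proof.
  rewrite tanh_exp. assert (0 < exp (2*y)) by apply exp_pos.
  replace ((exp (2*y) - 1) / (exp (2*y) + 1)) with (1 - 2 / (exp (2*y) + 1)) by (field; lra).
  assert (0 < 2 / (exp (2*y) + 1)) by (apply Rdiv_lt_0_compat; lra).
  assert (2 / (exp (2*y) + 1) < 2).
  { apply Rmult_lt_reg_r with (exp (2*y) + 1); [lra|].
    unfold Rdiv. rewrite Rmult_assoc, Rinv_l by lra. nra. }
  lra.
Qed.

Lemma tanh_abs y : Rabs (tanh y) <= 1.
Proof. pose proof (tanh_bound y). apply Rabs_le. lra. Qed.

Lemma tanh_diff a b : tanh a - tanh b =
  2 * (exp (2*a) - exp (2*b)) / ((exp (2*a) + 1) * (exp (2*b) + 1)).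
Proof.
  rewrite !tanh_exp. assert (0 < exp (2*a)) by apply exp_pos.
  assert (0 < exp (2*b)) by apply exp_pos. field. lra.
Qed.

Lemma exp_2d a b : exp (2*a) = exp (2*b) * exp (2*(a-b)).
Proof. rewrite <- exp_plus. f_equal. ring. Qed.

Lemma tanh_lip_le a b : b <= a -> 0 <= tanh a - tanh b <= 4 * (a - b).
Proof.
  intros Hab. rewrite tanh_diff. set (p := exp (2*b)). set (q := exp (2*a)).
  assert (Hp : 0 < p) by apply exp_pos. assert (Hq : 0 < q) by apply exp_pos.
  assert (Hqp : q = p * exp (2*(a-b))) by apply exp_2d.
  assert (He : 1 <= exp (2*(a-b))).
  { pose proof (exp_ineq1_le (2*(a-b))). lra. }
  assert (He2 : 1 - 2*(a-b) <= exp (-(2*(a-b)))) by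
    (pose proof (exp_ineq1_le (-(2*(a-b)))); lra).
  rewrite exp_Ropp in He2.
  assert (Hpq : p <= q) by (rewrite Hqp; nra).
  split.
  - apply Rmult_le_pos; [lra|]. left. apply Rinv_0_lt_compat. nra.
  -
    assert (H1 : p / q >= 1 - 2*(a-b)).
    { rewrite Hqp. replace (p / (p * exp (2 * (a - b)))) with (/ exp (2*(a-b)))
        by (field; split; lra). lra. }
    assert (H2 : (q - p) <= 2*(a-b) * q).
    { assert (p >= (1 - 2*(a-b)) * q).
      { replace p with (p / q * q) at 1 by (field; lra). nra. }
      lra. }
    apply Rle_trans with (2 * (q - p) / q).
    + unfold Rdiv. apply Rmult_le_compat_l; [lra|].
      apply Rinv_le_contravar; [lra|]. nra.
    + apply Rle_trans with (2 * (2 * (a-b) * q) / q).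
      * unfold Rdiv. apply Rmult_le_compat_r; [left; apply Rinv_0_lt_compat; lra|lra].
      * right. field. lra.
Qed.

Lemma tanh_lip a b : Rabs (tanh a - tanh b) <= 4 * Rabs (a - b).
Proof.
  destruct (Rle_dec b a).
  - pose proof (tanh_lip_le a b r). rewrite !Rabs_right by lra. lra.
  - pose proof (tanh_lip_le b a ltac:(lra)).
    rewrite Rabs_left1 by lra. rewrite Rabs_left by lra. lra.
Qed.

Lemma tanh_mono a b : b < a -> tanh b < tanh a.
Proof.
  intros H. assert (0 < tanh a - tanh b); [|lra]. rewrite tanh_diff.
  assert (exp (2*b) < exp (2*a)) by (apply exp_increasing; lra).
  assert (0 < exp (2*a)) by apply exp_pos. assert (0 < exp (2*b)) by apply exp_pos.
  apply Rdiv_lt_0_compat; nra.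
Qed.

Lemma abs_le_inv x K : Rabs x <= K -> -K <= x <= K.
Proof. unfold Rabs; destruct (Rcase_abs x); lra. Qed.

Definition slopeK (K : R) : R := 4 * exp (-(2*K)) / (exp (2*K) + 1)^2.

Lemma slopeK_pos K : 0 < slopeK K.
Proof.
  unfold slopeK. assert (0 < exp (-(2*K))) by apply exp_pos.
  assert (0 < exp (2*K)) by apply exp_pos. apply Rdiv_lt_0_compat; nra.
Qed.

Lemma tanh_slope_le K a b : Rabs a <= K -> Rabs b <= K -> b <= a ->
  slopeK K * (a - b) <= tanh a - tanh b.
Proof.
  intros Ha Hb Hab. rewrite tanh_diff. unfold slopeK.
  set (p := exp (2*b)). set (q := exp (2*a)).
  assert (Hp : 0 < p) by apply exp_pos. assert (Hq : 0 < q) by apply exp_pos.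
  assert (Hqp : q = p * exp (2*(a-b))) by apply exp_2d.
  assert (He : 1 + 2*(a-b) <= exp (2*(a-b))) by apply exp_ineq1_le.
  assert (H1 : 2*(a-b)*p <= q - p) by (rewrite Hqp; nra).
  apply abs_le_inv in Ha. apply abs_le_inv in Hb.
  assert (HpK : exp (-(2*K)) <= p) by (unfold p; destruct (Req_dec b (-K));
    [subst; right; f_equal; ring| left; apply exp_increasing; lra]).
  assert (HqK : q <= exp (2*K)) by (unfold q; destruct (Req_dec a K);
    [subst; right; reflexivity| left; apply exp_increasing; lra]).
  assert (HpK2 : p <= exp (2*K)) by (unfold p; destruct (Req_dec b K);
    [subst; right; reflexivity| left; apply exp_increasing; lra]).
  set (E1 := exp (-(2*K))) in *. set (E2 := exp (2*K)) in *.
  assert (0 < E1) by apply exp_pos.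
  assert (Hden : 0 < (q+1)*(p+1)) by nra.
  assert (Hden2 : (q+1)*(p+1) <= (E2+1)^2) by nra.
  assert (Hd : 0 <= a - b) by lra.
  assert (Hi1 : 0 < / ((q+1)*(p+1))) by (apply Rinv_0_lt_compat; lra).
  apply Rle_trans with ((4 * (a-b) * E1) * / ((E2+1)^2)).
  { right. unfold Rdiv. ring. }
  apply Rle_trans with ((4 * (a-b) * E1) * / ((q+1)*(p+1))).
  { apply Rmult_le_compat_l; [nra|]. apply Rinv_le_contravar; lra. }
  apply Rle_trans with ((4 * (a-b) * p) * / ((q+1)*(p+1))).
  { apply Rmult_le_compat_r; [lra|]. nra. }
  unfold Rdiv. apply Rmult_le_compat_r; lra.
Qed.

Lemma tanh_slope K a b : Rabs a <= K -> Rabs b <= K ->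
  slopeK K * (a - b)^2 <= (tanh a - tanh b) * (a - b).
Proof.
  intros Ha Hb. destruct (Rle_dec b a).
  - pose proof (tanh_slope_le K a b Ha Hb r). pose proof (slopeK_pos K).
    replace (slopeK K * (a-b)^2) with ((slopeK K * (a-b)) * (a-b)) by ring.
    apply Rmult_le_compat_r; lra.
  - pose proof (tanh_slope_le K b a Hb Ha ltac:(lra)). pose proof (slopeK_pos K).
    replace (slopeK K * (a-b)^2) with ((slopeK K * (b-a)) * (b-a)) by ring.
    replace ((tanh a - tanh b) * (a-b)) with ((tanh b - tanh a) * (b - a)) by ring.
    apply Rmult_le_compat_r; lra.
Qed.

Lemma tanh_prod_nonneg a b : 0 <= (tanh a - tanh b) * (a - b).
Proof.
  destruct (Rtotal_order a b) as [H|[H|H]].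
  - pose proof (tanh_mono b a H). nra.
  - subst. lra.
  - pose proof (tanh_mono a b H). nra.
Qed.

Lemma tanh_prod_zero a b : (tanh a - tanh b) * (a - b) = 0 -> a = b.
Proof.
  intros H. destruct (Rtotal_order a b) as [H1|[H1|H1]]; auto.
  - pose proof (tanh_mono b a H1). nra.
  - pose proof (tanh_mono a b H1). nra.
Qed.

Lemma tanh_0 : tanh 0 = 0.
Proof. rewrite tanh_exp. rewrite Rmult_0_r, exp_0. field. Qed.

Lemma tanh_odd y : tanh (-y) = - tanh y.
Proof. unfold tanh, sinh, cosh. rewrite Ropp_involutive.
  assert (0 < exp y) by apply exp_pos. assert (0 < exp (-y)) by apply exp_pos.
  field. lra. Qed.

Lemma tanh_mono_le a b : b <= a -> tanh b <= tanh a.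
Proof. intros H. destruct (Req_dec a b); [subst; lra|]. left; apply tanh_mono; lra. Qed.

Lemma tanh_abs_ge y b : 0 <= b -> b <= Rabs y -> tanh b <= Rabs (tanh y).
Proof.
  intros Hb H. destruct (Rle_dec 0 y).
  - rewrite Rabs_right in H by lra. pose proof (tanh_mono_le y b H).
    pose proof (tanh_mono_le y 0 r). rewrite tanh_0 in H1.
    rewrite Rabs_right; lra.
  - rewrite Rabs_left in H by lra. replace (tanh y) with (- tanh (-y))
      by (rewrite tanh_odd; ring). rewrite Rabs_Ropp.
    pose proof (tanh_mono_le (-y) b H).
    pose proof (tanh_mono_le (-y) 0 ltac:(lra)). rewrite tanh_0 in H1.
    rewrite Rabs_right; lra.
Qed.

Lemma tanh_pos b : 0 < b -> 0 < tanh b.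
Proof. intros H. pose proof (tanh_mono b 0 H). rewrite tanh_0 in H0. lra. Qed.

Lemma tanh_flip h : (1 - tanh h) * exp h + (-1 - tanh h) * exp (-h) = 0.
Proof. unfold tanh, sinh, cosh. assert (0 < exp h) by apply exp_pos.
  assert (0 < exp (-h)) by apply exp_pos. field. lra. Qed.

Lemma lip_cont (f : R -> R) L : 0 <= L -> (forall a b, Rabs (f a - f b) <= L * Rabs (a - b)) ->
  continuity f.
Proof.
  intros HL H x eps Heps. exists (eps / (L + 1)). split.
  - apply Rdiv_lt_0_compat; lra.
  - intros y [_ Hy]. simpl in *. unfold R_dist in *.
    eapply Rle_lt_trans; [apply H|].
    apply Rle_lt_trans with ((L+1) * Rabs (y - x)).
    + apply Rmult_le_compat_r; [apply Rabs_pos|lra].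
    + replace eps with ((L+1) * (eps / (L+1))) by (field; lra).
      apply Rmult_lt_compat_l; lra.
Qed.

Definition spin (n : nat) (x : nat -> R) := forall i, (i < n)%nat -> x i = 1 \/ x i = -1.

Lemma configs_spin n x : In x (configs n) -> spin n x.
Proof.
  revert x. induction n; intros x Hx i Hi; [lia|].
  simpl in Hx. apply in_flat_map in Hx. destruct Hx as [y [Hy Hx]].
  simpl in Hx. destruct Hx as [<-|[<-|[]]]; unfold upd;
  destruct (Nat.eqb_spec i n); auto; apply IHn; auto; lia.
Qed.

Lemma spin_upd n x j s : spin n x -> (s = 1 \/ s = -1) -> spin n (upd x j s).
Proof. intros H Hs i Hi. unfold upd. destruct (Nat.eqb i j); auto. Qed.

Lemma upd_same x j a b : upd (upd x j a) j b = upd x j b.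
Proof. apply functional_extensionality. intros i. unfold upd. destruct (Nat.eqb i j); auto. Qed.

Lemma upd_comm x j k a b : j <> k -> upd (upd x k a) j b = upd (upd x j b) k a.
Proof.
  intros H. apply functional_extensionality. intros i. unfold upd.
  destruct (Nat.eqb_spec i j), (Nat.eqb_spec i k); subst; auto. lia.
Qed.

Lemma upd_self x j : upd x j (x j) = x.
Proof. apply functional_extensionality. intros i. unfold upd. destruct (Nat.eqb_spec i j); subst; auto. Qed.

Lemma upd_eq x j s : upd x j s j = s.
Proof. unfold upd. rewrite Nat.eqb_refl. auto. Qed.

Lemma upd_neq x j k s : k <> j -> upd x j s k = x k.
Proof. intros H. unfold upd. destruct (Nat.eqb_spec k j); [lia|auto]. Qed.

Lemma lsum_nil {T} (f : T -> R) : lsum nil f = 0.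
Proof. reflexivity. Qed.
Lemma lsum_cons {T} a l (f : T -> R) : lsum (a :: l) f = f a + lsum l f.
Proof. reflexivity. Qed.
Lemma lsum_app {T} l1 l2 (f : T -> R) : lsum (l1 ++ l2) f = lsum l1 f + lsum l2 f.
Proof. induction l1; simpl; [lra|]. unfold lsum in *. simpl. rewrite IHl1. lra. Qed.
Lemma lsum_plus {T} l (f g : T -> R) : lsum l (fun x => f x + g x) = lsum l f + lsum l g.
Proof. induction l; unfold lsum in *; simpl; [lra|]. rewrite IHl. lra. Qed.
Lemma lsum_scal {T} l c (f : T -> R) : lsum l (fun x => c * f x) = c * lsum l f.
Proof. induction l; unfold lsum in *; simpl; [lra|]. rewrite IHl. lra. Qed.
Lemma lsum_ext {T} l (f g : T -> R) : (forall x, In x l -> f x = g x) -> lsum l f = lsum l g.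
Proof. induction l; intros H; unfold lsum in *; simpl; [lra|]. rewrite IHl, H; simpl; auto; intros; apply H; simpl; auto. Qed.
Lemma lsum_le {T} l (f g : T -> R) : (forall x, In x l -> f x <= g x) -> lsum l f <= lsum l g.
Proof. induction l; intros H; unfold lsum in *; simpl; [lra|].
  assert (f a <= g a) by (apply H; simpl; auto).
  assert (fold_right (fun t acc => f t + acc) 0 l <= fold_right (fun t acc => g t + acc) 0 l)
   by (apply IHl; intros; apply H; simpl; auto). lra. Qed.
Lemma lsum_nonneg {T} l (f : T -> R) : (forall x, In x l -> 0 <= f x) -> 0 <= lsum l f.
Proof. intros H. replace 0 with (lsum l (fun _ => 0)). apply lsum_le; auto.
  induction l; unfold lsum in *; simpl; auto. rewrite IHl; [lra|]. intros; apply H; simpl; auto. Qed.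
Lemma lsum_abs {T} l (f : T -> R) : Rabs (lsum l f) <= lsum l (fun x => Rabs (f x)).
Proof. induction l; unfold lsum in *; simpl; [rewrite Rabs_R0; lra|].
  eapply Rle_trans; [apply Rabs_triang|]. lra. Qed.
Lemma lsum_flat_map {T U} (g : T -> list U) l f :
  lsum (flat_map g l) f = lsum l (fun y => lsum (g y) f).
Proof. induction l; simpl; [reflexivity|]. rewrite lsum_app, IHl. reflexivity. Qed.
Lemma lsum_rsum {T} l n (f : nat -> T -> R) :
  lsum l (fun x => rsum n (fun j => f j x)) = rsum n (fun j => lsum l (f j)).
Proof.
  induction l.
  - rewrite lsum_nil. rewrite (rsum_ext n _ (fun _ => 0)) by (intros; reflexivity).
    rewrite rsum_const. lra.
  - rewrite lsum_cons, IHl, <- rsum_plus. apply rsum_ext. intros. rewrite lsum_cons. reflexivity.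
Qed.

Lemma lsum_configs_S k f :
  lsum (configs (S k)) f = lsum (configs k) (fun y => f (upd y k 1) + f (upd y k (-1))).
Proof. simpl. rewrite lsum_flat_map. apply lsum_ext. intros. unfold lsum; simpl. lra. Qed.

Lemma pairing n j F : (j < n)%nat ->
  lsum (configs n) (fun x => F (upd x j 1) + F (upd x j (-1))) = 2 * lsum (configs n) F.
Proof.
  revert j F. induction n; intros j F Hj; [lia|].
  rewrite !lsum_configs_S. destruct (Nat.eq_dec j n).
  - subst. rewrite <- lsum_scal. apply lsum_ext. intros y _. rewrite !upd_same. lra.
  - rewrite <- (IHn j (fun z => F (upd z n 1) + F (upd z n (-1)))) by lia.
    apply lsum_ext. intros y _. rewrite !(upd_comm _ j n) by lia. lra.
Qed.

Section Flip.
Variable A : coupling.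
Variable n : nat.
Hypothesis hA : valid_coupling A.

Definition dlt (j : nat) (s : R) := fun i : nat => if Nat.eqb i j then s else 0.

Lemma upd_split x j s i : upd x j s i = upd x j 0 i + dlt j s i.
Proof. unfold upd, dlt. destruct (Nat.eqb i j); ring. Qed.

Lemma rsum_dlt_r j s (f : nat -> R) : (j < n)%nat ->
  rsum n (fun l => f l * dlt j s l) = f j * s.
Proof.
  intros Hj. rewrite <- (rsum_delta n j (fun l => f l * s) Hj). apply rsum_ext.
  intros l _. unfold dlt. destruct (Nat.eqb l j); ring.
Qed.

Lemma rsum_dlt_l j s (f : nat -> R) : (j < n)%nat ->
  rsum n (fun l => dlt j s l * f l) = s * f j.
Proof.
  intros Hj. rewrite <- (rsum_delta n j (fun l => s * f l) Hj). apply rsum_ext.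
  intros l _. unfold dlt. destruct (Nat.eqb l j); ring.
Qed.

Lemma mloc_upd_self x j s : (j < n)%nat -> mloc A n j (upd x j s) = mloc A n j x.
Proof.
  intros Hj. unfold mloc. apply rsum_ext. intros l Hl. unfold upd.
  destruct (Nat.eqb_spec l j); [subst; destruct (hA n j j Hj Hj) as [_ [_ ->]]; ring|auto].
Qed.

Lemma mloc_upd x j k s : (j < n)%nat -> (k < n)%nat ->
  mloc A n k (upd x j s) = mloc A n k (upd x j 0) + s * A n k j.
Proof.
  intros Hj Hk. unfold mloc.
  rewrite (rsum_ext n (fun l => A n k l * upd x j s l) (fun l => A n k l * upd x j 0 l + A n k l * dlt j s l)).
  2:{ intros l _. rewrite (upd_split x j s l). ring. }
  rewrite rsum_plus. rewrite rsum_dlt_r by auto. ring.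
Qed.

Lemma mloc_flip x j k : (j < n)%nat -> (k < n)%nat ->
  mloc A n k (upd x j 1) - mloc A n k (upd x j (-1)) = 2 * A n k j.
Proof. intros. rewrite (mloc_upd x j k 1), (mloc_upd x j k (-1)) by auto. ring. Qed.

Definition Qf (x : nat -> R) := rsum n (fun i => rsum n (fun l => A n i l * x i * x l)).

Lemma Q_upd x j s : (j < n)%nat ->
  Qf (upd x j s) = Qf (upd x j 0) + 2 * s * mloc A n j x.
Proof.
  intros Hj. set (z := upd x j 0). set (d := dlt j s). unfold Qf.
  rewrite (rsum_ext n _ (fun i => rsum n (fun l => A n i l * z i * z l)
      + z i * rsum n (fun l => A n i l * d l) + d i * rsum n (fun l => A n i l * z l)
      + d i * rsum n (fun l => A n i l * d l))).
  2:{ intros i Hi. rewrite <- !rsum_scal, <- !rsum_plus. apply rsum_ext. intros l Hl.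
      rewrite !(upd_split x j s). fold z d. ring. }
  rewrite !rsum_plus.
  rewrite (rsum_ext n (fun i => z i * rsum n (fun l => A n i l * d l)) (fun i => s * (A n j i * z i))).
  2:{ intros i Hi. unfold d. rewrite rsum_dlt_r by auto.
      destruct (hA n i j Hi Hj) as [-> _]. ring. }
  rewrite rsum_scal. unfold d. rewrite rsum_dlt_l by auto. rewrite rsum_dlt_l by auto.
  rewrite rsum_dlt_r by auto.
  destruct (hA n j j Hj Hj) as [_ [_ ->]].
  replace (rsum n (fun i => A n j i * z i)) with (mloc A n j z) by reflexivity.
  unfold z. rewrite mloc_upd_self by auto. ring.
Qed.

Lemma sum_upd x j s : (j < n)%nat -> rsum n (upd x j s) = rsum n (upd x j 0) + s.
Proof.
  intros Hj. rewrite (rsum_ext n _ (fun i => upd x j 0 i + dlt j s i)) by (intros; apply upd_split).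
  rewrite rsum_plus. unfold dlt. rewrite (rsum_delta n j (fun _ => s) Hj). ring.
Qed.

Lemma weight_upd beta B x j s : (j < n)%nat ->
  weight A n beta B (upd x j s) =
  weight A n beta B (upd x j 0) * exp (s * (beta * mloc A n j x + B)).
Proof.
  intros Hj. unfold weight. rewrite <- exp_plus. f_equal.
  change (beta / 2 * Qf (upd x j s) + B * rsum n (fun i => upd x j s i) =
    beta / 2 * Qf (upd x j 0) + B * rsum n (fun i => upd x j 0 i) +
    s * (beta * mloc A n j x + B)).
  rewrite Q_upd by auto.
  rewrite (rsum_ext n (fun i => upd x j s i) (upd x j s)) by auto.
  rewrite (rsum_ext n (fun i => upd x j 0 i) (upd x j 0)) by auto.
  rewrite (sum_upd x j s) by auto. set (q := Qf (upd x j 0)). set (r := rsum n (upd x j 0)). set (m := mloc A n j x). field.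
Qed.

Definition uu beta B (x : nat -> R) j := tanh (beta * mloc A n j x + B).

Lemma flip_zero beta B j (G : (nat -> R) -> R) : (j < n)%nat ->
  (forall x s, G (upd x j s) = G x) ->
  lsum (configs n) (fun x => (x j - uu beta B x j) * G x * weight A n beta B x) = 0.
Proof.
  intros Hj HG.
  set (F := fun x => (x j - uu beta B x j) * G x * weight A n beta B x).
  assert (2 * lsum (configs n) F = 0); [|lra].
  rewrite <- (pairing n j F Hj). replace 0 with (lsum (configs n) (fun _ : nat -> R => 0)).
  2:{ clear. induction (configs n); auto. rewrite lsum_cons, IHl. ring. }
  apply lsum_ext. intros x _. unfold F. rewrite !upd_eq, !HG. unfold uu.
  rewrite !mloc_upd_self by auto. rewrite (weight_upd beta B x j 1), (weight_upd beta B x j (-1)) by auto.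
  set (h := beta * mloc A n j x + B).
  replace (-1 * h) with (-h) by ring. rewrite Rmult_1_l.
  pose proof (tanh_flip h).
  replace ((1 - tanh h) * G x * (weight A n beta B (upd x j 0) * exp h) +
   (-1 - tanh h) * G x * (weight A n beta B (upd x j 0) * exp (- h))) with
   (G x * weight A n beta B (upd x j 0) * ((1 - tanh h) * exp h + (-1 - tanh h) * exp (- h))) by ring.
  rewrite H. ring.
Qed.

Lemma weight_pos beta B x : 0 < weight A n beta B x.
Proof. apply exp_pos. Qed.

Lemma decouple beta B j (H : (nat -> R) -> R) : (j < n)%nat ->
  Rabs (lsum (configs n) (fun x => (x j - uu beta B x j) * H x * weight A n beta B x)) <=
  lsum (configs n) (fun x => Rabs (H (upd x j 1) - H (upd x j (-1))) * weight A n beta B x).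
Proof.
  intros Hj. set (G := fun x => (H (upd x j 1) + H (upd x j (-1))) / 2).
  assert (HG : forall x s, G (upd x j s) = G x) by (intros; unfold G; rewrite !upd_same; auto).
  pose proof (flip_zero beta B j G Hj HG).
  replace (lsum (configs n) (fun x => (x j - uu beta B x j) * H x * weight A n beta B x)) with
    (lsum (configs n) (fun x => (x j - uu beta B x j) * (H x - G x) * weight A n beta B x)).
  2:{ replace (lsum (configs n) (fun x => (x j - uu beta B x j) * H x * weight A n beta B x)) with
      (lsum (configs n) (fun x => (x j - uu beta B x j) * (H x - G x) * weight A n beta B x)
       + lsum (configs n) (fun x => (x j - uu beta B x j) * G x * weight A n beta B x)) by
      (rewrite <- lsum_plus; apply lsum_ext; intros; ring). lra. }
  eapply Rle_trans; [apply lsum_abs|]. apply lsum_le. intros x Hx.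
  pose proof (configs_spin n x Hx j Hj) as Hs.
  pose proof (weight_pos beta B x) as Hw.
  rewrite !Rabs_mult, (Rabs_right (weight _ _ _ _ x)) by lra.
  apply Rmult_le_compat_r; [lra|].
  assert (Hu : Rabs (uu beta B x j) <= 1) by apply tanh_abs.
  assert (E1 : Rabs (x j - uu beta B x j) <= 2).
  { unfold uu. pose proof (tanh_bound (beta * mloc A n j x + B)).
    apply Rabs_le. destruct Hs as [-> | ->]; lra. }
  assert (E2 : Rabs (H x - G x) = Rabs (H (upd x j 1) - H (upd x j (-1))) / 2).
  { unfold G. destruct Hs as [Hs|Hs]; rewrite <- (upd_self x j) at 1; rewrite Hs.
    - replace (H (upd x j 1) - (H (upd x j 1) + H (upd x j (-1))) / 2) with
        ((H (upd x j 1) - H (upd x j (-1))) / 2) by field.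
      unfold Rdiv. rewrite Rabs_mult, (Rabs_right (/2)) by lra. reflexivity.
    - replace (H (upd x j (-1)) - (H (upd x j 1) + H (upd x j (-1))) / 2) with
        (- ((H (upd x j 1) - H (upd x j (-1))) / 2)) by field.
      rewrite Rabs_Ropp. unfold Rdiv. rewrite Rabs_mult, (Rabs_right (/2)) by lra. reflexivity. }
  rewrite E2. pose proof (Rabs_pos (x j - uu beta B x j)).
  pose proof (Rabs_pos (H (upd x j 1) - H (upd x j (-1)))).
  apply Rle_trans with (2 * (Rabs (H (upd x j 1) - H (upd x j (-1))) / 2)).
  - apply Rmult_le_compat_r; lra.
  - lra.
Qed.

End Flip.

Lemma sq_rsum n (a : nat -> R) : (rsum n a)^2 = rsum n (fun j => rsum n (fun k => a j * a k)).
Proof.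
  replace ((rsum n a)^2) with (rsum n a * rsum n a) by ring.
  rewrite <- rsum_scal_r. apply rsum_ext. intros j _. rewrite rsum_scal. reflexivity.
Qed.

Section SM.
Variable A : coupling.
Variable n : nat.
Hypothesis hA : valid_coupling A.
Variables beta B : R.
Let w := weight A n beta B.
Let u := uu A n beta B.

Lemma lsum_const_w c : lsum (configs n) (fun x => c * w x) = c * Zpart A n beta B.
Proof. rewrite lsum_scal. reflexivity. Qed.

Lemma second_moment (c : nat -> (nat -> R) -> R) (C : nat -> R) (D : nat -> nat -> R) :
  (forall j x, (j < n)%nat -> spin n x -> Rabs (c j x) <= C j) ->
  (forall j k x, (j < n)%nat -> (k < n)%nat -> j <> k -> spin n x ->
     Rabs (c j (upd x j 1) * c k (upd x j 1) * (upd x j 1 k - u (upd x j 1) k)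
         - c j (upd x j (-1)) * c k (upd x j (-1)) * (upd x j (-1) k - u (upd x j (-1)) k))
     <= D j k) ->
  lsum (configs n) (fun x => (rsum n (fun j => c j x * (x j - u x j)))^2 * w x) <=
  Zpart A n beta B * rsum n (fun j => rsum n (fun k => if Nat.eqb j k then 4 * C j ^ 2 else D j k)).
Proof.
  intros HC HD.
  rewrite (lsum_ext _ _ (fun x => rsum n (fun j => rsum n (fun k =>
     (c j x * (x j - u x j)) * (c k x * (x k - u x k)) * w x)))).
  2:{ intros x _. rewrite sq_rsum, <- rsum_scal_r. apply rsum_ext. intros j _.
      rewrite <- rsum_scal_r. reflexivity. }
  rewrite lsum_rsum, <- rsum_scal. apply rsum_le. intros j Hj.
  rewrite lsum_rsum, <- rsum_scal. apply rsum_le. intros k Hk.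
  destruct (Nat.eqb_spec j k).
  - subst k. rewrite Rmult_comm, <- lsum_const_w. apply lsum_le. intros x Hx.
    pose proof (configs_spin n x Hx) as Hs.
    pose proof (weight_pos A n beta B x). fold w in H.
    apply Rmult_le_compat_r; [lra|].
    assert (Hb : Rabs (x j - u x j) <= 2).
    { unfold u, uu. pose proof (tanh_bound (beta * mloc A n j x + B)).
      apply Rabs_le. destruct (Hs j Hj) as [-> | ->]; lra. }
    pose proof (HC j x Hj Hs).
    assert (Rabs (c j x * (x j - u x j)) <= C j * 2).
    { rewrite Rabs_mult. apply Rmult_le_compat; auto using Rabs_pos. }
    assert (0 <= C j) by (eapply Rle_trans; [apply Rabs_pos|eauto]).
    set (t := c j x * (x j - u x j)) in *.
    replace (t * t) with (Rsqr t) by reflexivity.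
    apply Rle_trans with (Rsqr (C j * 2)).
    + apply Rsqr_le_abs_1. rewrite (Rabs_right (C j * 2)) by lra. auto.
    + unfold Rsqr. lra.
  - rewrite Rmult_comm, <- lsum_const_w.
    set (H := fun y => c j y * c k y * (y k - u y k)).
    rewrite (lsum_ext _ _ (fun x => (x j - u x j) * H x * w x)).
    2:{ intros x _. unfold H. ring. }
    eapply Rle_trans; [apply Rle_abs|].
    eapply Rle_trans; [apply (decouple A n hA beta B j H Hj)|].
    apply lsum_le. intros x Hx. pose proof (configs_spin n x Hx) as Hs.
    pose proof (weight_pos A n beta B x).
    apply Rmult_le_compat_r; [left; apply weight_pos|]. apply HD; auto.
Qed.

End SM.

Section Inst.
Variable A : coupling.
Variable n : nat.
Hypothesis hA : valid_coupling A.
Variable gamma : R.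
Hypothesis hg : forall i, (i < n)%nat -> rowsum A n i <= gamma.
Variables beta B : R.
Hypothesis hbeta : 0 <= beta.
Let w := weight A n beta B.
Let u := uu A n beta B.

Lemma A_nn i j : (i < n)%nat -> (j < n)%nat -> 0 <= A n i j.
Proof. intros. apply hA; auto. Qed.

Lemma A_sym i j : (i < n)%nat -> (j < n)%nat -> A n i j = A n j i.
Proof. intros. apply hA; auto. Qed.

Lemma colsum j : (j < n)%nat -> rsum n (fun i => A n i j) = rowsum A n j.
Proof. intros. unfold rowsum. apply rsum_ext. intros. apply A_sym; auto. Qed.

Lemma rowsum_nn i : (i < n)%nat -> 0 <= rowsum A n i.
Proof. intros. apply rsum_nonneg. intros. apply A_nn; auto. Qed.

Lemma mloc_bound k x : (k < n)%nat -> spin n x -> Rabs (mloc A n k x) <= gamma.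
Proof.
  intros Hk Hs. unfold mloc. eapply Rle_trans; [apply rsum_abs|].
  eapply Rle_trans; [|apply (hg k Hk)]. unfold rowsum. apply rsum_le. intros l Hl.
  rewrite Rabs_mult. rewrite Rabs_right by (apply Rle_ge, A_nn; auto).
  assert (Rabs (x l) = 1) by (destruct (Hs l Hl) as [-> | ->]; unfold Rabs; destruct Rcase_abs; lra).
  rewrite H. lra.
Qed.

Lemma u_flip x j k : (j < n)%nat -> (k < n)%nat ->
  Rabs (u (upd x j 1) k - u (upd x j (-1)) k) <= 8 * beta * A n k j.
Proof.
  intros Hj Hk. unfold u, uu. eapply Rle_trans; [apply tanh_lip|].
  replace (beta * mloc A n k (upd x j 1) + B - (beta * mloc A n k (upd x j (-1)) + B))
    with (beta * (mloc A n k (upd x j 1) - mloc A n k (upd x j (-1)))) by ring.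
  rewrite mloc_flip by auto. rewrite Rabs_mult, Rabs_right by lra.
  rewrite Rabs_right by (pose proof (A_nn k j Hk Hj); lra). lra.
Qed.

Lemma if_split (b : bool) X Y : 0 <= Y -> (if b then X else Y) <= (if b then X else 0) + Y.
Proof. destruct b; lra. Qed.

Lemma rsum_if_diag (X : nat -> R) (Y : nat -> nat -> R) :
  (forall j k, (j < n)%nat -> (k < n)%nat -> 0 <= Y j k) ->
  rsum n (fun j => rsum n (fun k => if Nat.eqb j k then X j else Y j k)) <=
  rsum n X + rsum n (fun j => rsum n (fun k => Y j k)).
Proof.
  intros HY. rewrite <- rsum_plus. apply rsum_le. intros j Hj.
  apply Rle_trans with (rsum n (fun k => (if Nat.eqb k j then X j else 0) + Y j k)).
  - apply rsum_le. intros k Hk. rewrite Nat.eqb_sym. apply if_split; auto.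
  - rewrite rsum_plus, (rsum_delta n j (fun _ => X j) Hj). right; reflexivity.
Qed.

Lemma triangle :
  rsum n (fun i => rsum n (fun j => rsum n (fun k => A n i j * A n i k * A n k j))) <=
  gamma * rsum n (fun i => rsum n (fun j => A n i j ^ 2)).
Proof.
  apply Rle_trans with (rsum n (fun i => rsum n (fun j => rsum n (fun k =>
     A n i k * A n i j ^ 2 / 2 + A n i k * A n k j ^ 2 / 2)))).
  { apply rsum_le; intros i Hi; apply rsum_le; intros j Hj; apply rsum_le; intros k Hk.
    pose proof (A_nn i k Hi Hk). pose proof (A_nn i j Hi Hj). pose proof (A_nn k j Hk Hj).
    assert (0 <= A n i k * (A n i j - A n k j)^2) by (apply Rmult_le_pos; [lra|apply pow2_ge_0]).
    lra. }
  rewrite (rsum_ext n _ (fun i => rsum n (fun j => rsum n (fun k => A n i k * A n i j ^ 2 / 2))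
                             + rsum n (fun j => rsum n (fun k => A n i k * A n k j ^ 2 / 2)))).
  2:{ intros. rewrite <- rsum_plus. apply rsum_ext. intros. apply rsum_plus. }
  rewrite rsum_plus.
  assert (H1 : rsum n (fun i => rsum n (fun j => rsum n (fun k => A n i k * A n i j ^ 2 / 2)))
     <= gamma / 2 * rsum n (fun i => rsum n (fun j => A n i j ^ 2))).
  { rewrite <- rsum_scal. apply rsum_le. intros i Hi. rewrite <- rsum_scal. apply rsum_le. intros j Hj.
    rewrite (rsum_ext n _ (fun k => (A n i j ^ 2 / 2) * A n i k)) by (intros; field).
    rewrite rsum_scal. fold (rowsum A n i). pose proof (hg i Hi).
    assert (0 <= A n i j ^ 2 / 2) by (pose proof (pow2_ge_0 (A n i j)); lra).
    replace (gamma / 2 * A n i j ^ 2) with (A n i j ^ 2 / 2 * gamma) by field.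
    apply Rmult_le_compat_l; auto. }
  assert (H2 : rsum n (fun i => rsum n (fun j => rsum n (fun k => A n i k * A n k j ^ 2 / 2)))
     <= gamma / 2 * rsum n (fun i => rsum n (fun j => A n i j ^ 2))).
  { rewrite (rsum_swap n n (fun i j => rsum n (fun k => A n i k * A n k j ^ 2 / 2))).
    rewrite (rsum_ext n (fun j => rsum n (fun i => rsum n (fun k => A n i k * A n k j ^ 2 / 2)))
       (fun j => rsum n (fun k => rsum n (fun i => A n i k * A n k j ^ 2 / 2))))
      by (intros; apply rsum_swap).
    rewrite (rsum_swap n n (fun j k => rsum n (fun i => A n i k * A n k j ^ 2 / 2))).
    rewrite <- rsum_scal. apply rsum_le. intros k Hk. rewrite <- rsum_scal. apply rsum_le. intros j Hj.
    rewrite (rsum_ext n _ (fun i => (A n k j ^ 2 / 2) * A n i k)) by (intros; field).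
    rewrite rsum_scal, colsum by auto. pose proof (hg k Hk).
    assert (0 <= A n k j ^ 2 / 2) by (pose proof (pow2_ge_0 (A n k j)); lra).
    replace (gamma / 2 * A n k j ^ 2) with (A n k j ^ 2 / 2 * gamma) by field.
    apply Rmult_le_compat_l; auto. }
  lra.
Qed.

Definition Sloc i x := rsum n (fun j => A n i j * (x j - u x j)).

Lemma moment_S i : (i < n)%nat ->
  lsum (configs n) (fun x => (Sloc i x)^2 * w x) <=
  Zpart A n beta B * (4 * rsum n (fun j => A n i j ^ 2) +
      8 * beta * rsum n (fun j => rsum n (fun k => A n i j * A n i k * A n k j))).
Proof.
  intros Hi.
  eapply Rle_trans.
  { apply (second_moment A n hA beta B (fun j _ => A n i j) (fun j => A n i j)
       (fun j k => 8 * beta * (A n i j * A n i k * A n k j))).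
    - intros j x Hj _. rewrite Rabs_right by (apply Rle_ge, A_nn; auto). lra.
    - intros j k x Hj Hk Hjk Hs. fold u.
      rewrite !upd_neq by auto.
      replace (A n i j * A n i k * (x k - u (upd x j 1) k) - A n i j * A n i k * (x k - u (upd x j (-1)) k))
        with (- (A n i j * A n i k) * (u (upd x j 1) k - u (upd x j (-1)) k)) by ring.
      rewrite Rabs_mult, Rabs_Ropp. pose proof (A_nn i j Hi Hj). pose proof (A_nn i k Hi Hk).
      rewrite (Rabs_right (A n i j * A n i k)) by (apply Rle_ge, Rmult_le_pos; auto).
      replace (8 * beta * (A n i j * A n i k * A n k j)) with ((A n i j * A n i k) * (8 * beta * A n k j)) by ring.
      apply Rmult_le_compat_l; [apply Rmult_le_pos; auto|]. apply u_flip; auto. }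
  pose proof (lsum_nonneg (configs n) (weight A n beta B) (fun x _ => Rlt_le _ _ (weight_pos A n beta B x))) as HZ.
  apply Rmult_le_compat_l; [exact HZ|].
  eapply Rle_trans; [apply rsum_if_diag|].
  { intros j k Hj Hk. pose proof (A_nn i j Hi Hj). pose proof (A_nn i k Hi Hk). pose proof (A_nn k j Hk Hj).
    apply Rmult_le_pos; [lra|]. apply Rmult_le_pos; [apply Rmult_le_pos|]; auto. }
  rewrite (rsum_ext n (fun j => 4 * A n i j ^ 2) (fun j => 4 * A n i j ^ 2)) by auto.
  rewrite rsum_scal.
  rewrite (rsum_ext n (fun j => rsum n (fun k => 8 * beta * (A n i j * A n i k * A n k j)))
     (fun j => 8 * beta * rsum n (fun k => A n i j * A n i k * A n k j))) by (intros; apply rsum_scal).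
  rewrite rsum_scal. lra.
Qed.

Lemma moment_g2 :
  lsum (configs n) (fun x => (rsum n (fun j => 1 * (x j - u x j)))^2 * w x) <=
  Zpart A n beta B * (4 * INR n + 8 * beta * gamma * INR n).
Proof.
  eapply Rle_trans.
  { apply (second_moment A n hA beta B (fun _ _ => 1) (fun _ => 1) (fun j k => 8 * beta * A n k j)).
    - intros. rewrite Rabs_R1. lra.
    - intros j k x Hj Hk Hjk Hs. fold u. rewrite !upd_neq by auto.
      replace (1 * 1 * (x k - u (upd x j 1) k) - 1 * 1 * (x k - u (upd x j (-1)) k))
        with (- (u (upd x j 1) k - u (upd x j (-1)) k)) by ring.
      rewrite Rabs_Ropp. apply u_flip; auto. }
  pose proof (lsum_nonneg (configs n) (weight A n beta B) (fun x _ => Rlt_le _ _ (weight_pos A n beta B x))) as HZ.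
  apply Rmult_le_compat_l; [exact HZ|].
  eapply Rle_trans; [apply rsum_if_diag|].
  { intros j k Hj Hk. pose proof (A_nn k j Hk Hj). apply Rmult_le_pos; [lra|auto]. }
  rewrite rsum_const.
  assert (rsum n (fun j => rsum n (fun k => 8 * beta * A n k j)) <= 8 * beta * gamma * INR n).
  { rewrite (rsum_ext n _ (fun j => 8 * beta * rowsum A n j)).
    2:{ intros j Hj. rewrite rsum_scal, colsum; auto. }
    rewrite rsum_scal. replace (8 * beta * gamma * INR n) with (8 * beta * (rsum n (fun _ => gamma)))
      by (rewrite rsum_const; ring).
    apply Rmult_le_compat_l; [lra|]. apply rsum_le. auto. }
  lra.
Qed.

Lemma moment_g1 : (0 < n)%nat ->
  lsum (configs n) (fun x => (rsum n (fun j => mloc A n j x * (x j - u x j)))^2 * w x) <=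
  Zpart A n beta B * (4 * gamma ^ 2 * INR n + (4 * gamma + 8 * beta * gamma ^ 2) * gamma * INR n).
Proof.
  intros Hn.
  assert (Hg0 : 0 <= gamma) by (pose proof (rowsum_nn 0 Hn); pose proof (hg 0 Hn); lra).
  eapply Rle_trans.
  { apply (second_moment A n hA beta B (fun j x => mloc A n j x) (fun _ => gamma)
        (fun j k => (4 * gamma + 8 * beta * gamma ^ 2) * A n k j)).
    - intros. apply mloc_bound; auto.
    - intros j k x Hj Hk Hjk Hs. fold u. rewrite !upd_neq by auto.
      rewrite !mloc_upd_self by auto.
      set (a := mloc A n j x). set (mp := mloc A n k (upd x j 1)). set (mm := mloc A n k (upd x j (-1))).
      set (up := u (upd x j 1) k). set (um := u (upd x j (-1)) k).
      replace (a * mp * (x k - up) - a * mm * (x k - um)) with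
        (a * ((mp - mm) * (x k - up) + mm * (um - up))) by ring.
      assert (Ha : Rabs a <= gamma) by (apply mloc_bound; auto).
      assert (Hmm : Rabs mm <= gamma) by (apply mloc_bound; auto; apply spin_upd; auto).
      assert (Hd : mp - mm = 2 * A n k j) by (apply mloc_flip; auto).
      assert (Hu : Rabs (um - up) <= 8 * beta * A n k j).
      { rewrite <- Rabs_Ropp. replace (- (um - up)) with (up - um) by ring. apply u_flip; auto. }
      assert (Hx : Rabs (x k - up) <= 2).
      { unfold up, u, uu. pose proof (tanh_bound (beta * mloc A n k (upd x j 1) + B)).
        apply Rabs_le. destruct (Hs k Hk) as [-> | ->]; lra. }
      pose proof (A_nn k j Hk Hj).
      rewrite Rabs_mult. replace ((4 * gamma + 8 * beta * gamma ^ 2) * A n k j) with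
        (gamma * (2 * A n k j * 2 + gamma * (8 * beta * A n k j))) by ring.
      apply Rmult_le_compat; auto using Rabs_pos.
      eapply Rle_trans; [apply Rabs_triang|].
      rewrite !Rabs_mult, Hd. rewrite (Rabs_right (2 * A n k j)) by lra.
      apply Rplus_le_compat.
      + apply Rmult_le_compat_l; [lra|auto].
      + apply Rmult_le_compat; auto using Rabs_pos. }
  pose proof (lsum_nonneg (configs n) (weight A n beta B) (fun x _ => Rlt_le _ _ (weight_pos A n beta B x))) as HZ.
  apply Rmult_le_compat_l; [exact HZ|].
  eapply Rle_trans; [apply rsum_if_diag|].
  { intros j k Hj Hk. pose proof (A_nn k j Hk Hj). apply Rmult_le_pos; [|auto].
    pose proof (pow2_ge_0 gamma). nra. }
  rewrite rsum_const.
  assert (rsum n (fun j => rsum n (fun k => (4 * gamma + 8 * beta * gamma ^ 2) * A n k j))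
    <= (4 * gamma + 8 * beta * gamma ^ 2) * gamma * INR n).
  { rewrite (rsum_ext n _ (fun j => (4 * gamma + 8 * beta * gamma ^ 2) * rowsum A n j)).
    2:{ intros j Hj. rewrite rsum_scal, colsum; auto. }
    rewrite rsum_scal. replace ((4 * gamma + 8 * beta * gamma ^ 2) * gamma * INR n) with
      ((4 * gamma + 8 * beta * gamma ^ 2) * (rsum n (fun _ => gamma))) by (rewrite rsum_const; ring).
    apply Rmult_le_compat_l; [pose proof (pow2_ge_0 gamma); nra|]. apply rsum_le. auto. }
  lra.
Qed.

End Inst.

Section Pr.
Variable A : coupling.
Variable n : nat.
Variables beta B : R.
Let w := weight A n beta B.

Lemma configs_nonnil : configs n <> nil.
Proof.
  induction n as [|k IH]; simpl; [discriminate|].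
  destruct (configs k); [contradiction|]. simpl. discriminate.
Qed.

Lemma Z_pos : 0 < Zpart A n beta B.
Proof.
  unfold Zpart. pose proof configs_nonnil. destruct (configs n) as [|x l]; [contradiction|].
  rewrite lsum_cons. pose proof (weight_pos A n beta B x).
  pose proof (lsum_nonneg l (weight A n beta B) (fun y _ => Rlt_le _ _ (weight_pos A n beta B y))).
  lra.
Qed.

Lemma ind_01 P : 0 <= ind P <= 1.
Proof. unfold ind. destruct excluded_middle_informative; lra. Qed.

Lemma Prob_eq E : Prob A n beta B E = lsum (configs n) (fun x => ind (E x) * w x) / Zpart A n beta B.
Proof. reflexivity. Qed.

Lemma Prob_le E F : (forall x, spin n x -> E x -> F x) -> Prob A n beta B E <= Prob A n beta B F.
Proof.
  intros H. unfold Prob. unfold Rdiv. apply Rmult_le_compat_r; [left; apply Rinv_0_lt_compat, Z_pos|].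
  apply lsum_le. intros x Hx. apply Rmult_le_compat_r; [left; apply weight_pos|].
  unfold ind. destruct (excluded_middle_informative (E x)), (excluded_middle_informative (F x)); try lra.
  exfalso. apply n0. apply H; auto. apply configs_spin; auto.
Qed.

Lemma Prob_nonneg E : 0 <= Prob A n beta B E.
Proof.
  unfold Prob, Rdiv. apply Rmult_le_pos; [|left; apply Rinv_0_lt_compat, Z_pos].
  apply lsum_nonneg. intros x _. apply Rmult_le_pos; [apply ind_01|left; apply weight_pos].
Qed.

Lemma Prob_le_1 E : Prob A n beta B E <= 1.
Proof.
  unfold Prob. pose proof Z_pos. apply Rmult_le_reg_r with (Zpart A n beta B); auto.
  unfold Rdiv. rewrite Rmult_assoc, Rinv_l by lra. rewrite Rmult_1_r, Rmult_1_l.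
  unfold Zpart. apply lsum_le. intros x _. pose proof (ind_01 (E x)). pose proof (weight_pos A n beta B x).
  nra.
Qed.

Lemma Prob_false E : (forall x, spin n x -> ~ E x) -> Prob A n beta B E = 0.
Proof.
  intros H. unfold Prob. replace (lsum (configs n) (fun x => ind (E x) * weight A n beta B x)) with 0.
  - unfold Rdiv. ring.
  - transitivity (lsum (configs n) (fun _ : nat -> R => 0)).
    + clear. induction (configs n); auto. rewrite lsum_cons, <- IHl. ring.
    + apply lsum_ext. intros x Hx. unfold ind. destruct excluded_middle_informative; [|ring].
      exfalso. eapply H; eauto. apply configs_spin; auto.
Qed.

Lemma Prob_union3 E E1 E2 E3 : (forall x, spin n x -> E x -> E1 x \/ E2 x \/ E3 x) ->
  Prob A n beta B E <= Prob A n beta B E1 + Prob A n beta B E2 + Prob A n beta B E3.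
Proof.
  intros H. unfold Prob, Rdiv. rewrite <- !Rmult_plus_distr_r.
  apply Rmult_le_compat_r; [left; apply Rinv_0_lt_compat, Z_pos|].
  rewrite <- !lsum_plus. apply lsum_le. intros x Hx.
  pose proof (weight_pos A n beta B x).
  pose proof (ind_01 (E1 x)). pose proof (ind_01 (E2 x)). pose proof (ind_01 (E3 x)).
  assert (ind (E x) <= ind (E1 x) + ind (E2 x) + ind (E3 x)).
  { unfold ind at 1. destruct excluded_middle_informative as [He|He]; [|lra].
    destruct (H x (configs_spin n x Hx) He) as [G1|[G1|G1]]; unfold ind;
    destruct (excluded_middle_informative (E1 x)); destruct (excluded_middle_informative (E2 x));
    destruct (excluded_middle_informative (E3 x)); try lra; contradiction. }
  nra.
Qed.

Lemma Prob_compl E F : (forall x, spin n x -> ~ F x -> E x) ->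
  1 - Prob A n beta B F <= Prob A n beta B E.
Proof.
  intros H. pose proof Z_pos.
  assert (Hs : Prob A n beta B E + Prob A n beta B F >= 1).
  { unfold Prob. unfold Rdiv. rewrite <- Rmult_plus_distr_r, <- lsum_plus.
    apply Rle_ge. apply Rmult_le_reg_r with (Zpart A n beta B); auto.
    rewrite Rmult_assoc, Rinv_l by lra. rewrite Rmult_1_r, Rmult_1_l.
    unfold Zpart. apply lsum_le. intros x Hx. pose proof (weight_pos A n beta B x).
    assert (1 <= ind (E x) + ind (F x)).
    { unfold ind. destruct (excluded_middle_informative (F x)).
      - destruct excluded_middle_informative; lra.
      - destruct excluded_middle_informative; [lra|]. exfalso. apply n1. apply H; auto.
        apply configs_spin; auto. }
    nra. }
  lra.
Qed.

Lemma markov (f : (nat -> R) -> R) t : 0 < t -> (forall x, spin n x -> 0 <= f x) ->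
  Prob A n beta B (fun x => t <= f x) <=
  lsum (configs n) (fun x => f x * w x) / (Zpart A n beta B * t).
Proof.
  intros Ht Hf. pose proof Z_pos. unfold Prob.
  replace (lsum (configs n) (fun x => f x * w x) / (Zpart A n beta B * t)) with
    (lsum (configs n) (fun x => (f x / t) * w x) / Zpart A n beta B).
  2:{ rewrite (lsum_ext _ _ (fun x => / t * (f x * w x))) by (intros; unfold Rdiv; ring).
      rewrite lsum_scal. field. lra. }
  unfold Rdiv at 1 3. apply Rmult_le_compat_r; [left; apply Rinv_0_lt_compat; auto|].
  apply lsum_le. intros x Hx. apply Rmult_le_compat_r; [left; apply weight_pos|].
  pose proof (Hf x (configs_spin n x Hx)).
  unfold ind. destruct excluded_middle_informative.
  - apply Rmult_le_reg_r with t; auto. unfold Rdiv. rewrite Rmult_assoc, Rinv_l by lra. lra.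
  - apply Rmult_le_pos; auto. left; apply Rinv_0_lt_compat; auto.
Qed.

End Pr.

Lemma sq3 p q r : (p + q + r)^2 <= 3 * (p^2 + q^2 + r^2).
Proof.
  pose proof (pow2_ge_0 (p - q)). pose proof (pow2_ge_0 (q - r)). pose proof (pow2_ge_0 (p - r)).
  replace (3 * (p^2 + q^2 + r^2)) with ((p+q+r)^2 + ((p-q)^2 + (q-r)^2 + (p-r)^2)) by ring. lra.
Qed.

Section TL.
Variable A : coupling.
Variable n : nat.
Hypothesis hA : valid_coupling A.
Variable gamma : R.
Hypothesis hg : forall i, (i < n)%nat -> rowsum A n i <= gamma.
Variables beta B : R.
Hypothesis hbeta : 0 < beta.
Variable x : nat -> R.

Let m i := mloc A n i x.
Let a := mbar A n x.
Let t := tanh (beta * a + B).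
Let uj j := tanh (beta * m j + B).
Let e i := rsum n (fun j => A n i j * (uj j - t)).
Let S i := Sloc A n beta B i x.

Lemma ident i : (i < n)%nat -> m i = t * rowsum A n i + e i + S i.
Proof.
  intros Hi. unfold e, S, Sloc, rowsum, m, mloc.
  rewrite (rsum_ext n (fun j => A n i j * (uj j - t)) (fun j => A n i j * uj j - t * A n i j))
    by (intros; ring).
  rewrite (rsum_ext n (fun j => A n i j * (x j - uu A n beta B x j)) (fun j => A n i j * x j - A n i j * uj j))
    by (intros; unfold uj, uu, m; ring).
  rewrite !rsum_minus, rsum_scal. change (rsum n (A n i)) with (rsum n (fun j => A n i j)). ring.
Qed.

Lemma bound_e : (0 < n)%nat -> rsum n (fun i => e i ^ 2) <= 16 * beta^2 * gamma^2 * rsum n (fun j => (m j - a)^2).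
Proof.
  intros Hn.
  assert (Hg0 : 0 <= gamma) by (pose proof (rowsum_nn A n hA 0 Hn); pose proof (hg 0 Hn); lra).
  assert (Hd : forall j, (j < n)%nat -> (uj j - t)^2 <= 16 * beta^2 * (m j - a)^2).
  { intros j Hj. unfold uj, t. pose proof (tanh_lip (beta * m j + B) (beta * a + B)).
    replace (beta * m j + B - (beta * a + B)) with (beta * (m j - a)) in H by ring.
    rewrite Rabs_mult, (Rabs_right beta) in H by lra.
    replace (16 * beta ^ 2 * (m j - a) ^ 2) with ((4 * (beta * (m j - a)))^2) by ring.
    rewrite <- !Rsqr_pow2. apply Rsqr_le_abs_1. rewrite Rabs_mult, Rabs_mult, (Rabs_right 4) by lra.
    rewrite (Rabs_right beta) by lra. lra. }
  apply Rle_trans with (rsum n (fun i => gamma * rsum n (fun j => A n i j * (16 * beta^2 * (m j - a)^2)))).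
  { apply rsum_le. intros i Hi. unfold e.
    eapply Rle_trans; [apply (rsum_cs n (fun j => A n i j) (fun j => uj j - t))|].
    { intros. apply A_nn; auto. }
    apply Rmult_le_compat.
    - apply rsum_nonneg. intros. apply A_nn; auto.
    - apply rsum_nonneg. intros. apply Rmult_le_pos; [apply A_nn; auto|apply pow2_ge_0].
    - apply hg; auto.
    - apply rsum_le. intros j Hj. apply Rmult_le_compat_l; [apply A_nn; auto|auto]. }
  rewrite rsum_scal.
  rewrite (rsum_swap n n (fun i j => A n i j * (16 * beta ^ 2 * (m j - a) ^ 2))).
  rewrite (rsum_ext n (fun j => rsum n (fun i => A n i j * (16 * beta ^ 2 * (m j - a) ^ 2)))
     (fun j => (16 * beta ^ 2 * (m j - a) ^ 2) * rowsum A n j)).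
  2:{ intros j Hj. rewrite rsum_scal_r, colsum by auto. ring. }
  apply Rle_trans with (gamma * rsum n (fun j => (16 * beta ^ 2 * (m j - a) ^ 2) * gamma)).
  - apply Rmult_le_compat_l; auto. apply rsum_le. intros j Hj. apply Rmult_le_compat_l.
    + apply Rmult_le_pos; [pose proof (pow2_ge_0 beta); lra|apply pow2_ge_0].
    + apply hg; auto.
  - rewrite rsum_scal_r. rewrite (rsum_scal n (16 * beta ^ 2) (fun j => (m j - a) ^ 2)). right. ring.
Qed.

Lemma bound_var : (0 < n)%nat ->
  t^2 * rsum n (fun i => (rowsum A n i - rowsum_mean A n)^2) <=
  3 * (rsum n (fun i => (m i - a)^2) + rsum n (fun i => e i ^ 2) + rsum n (fun i => S i ^ 2)).
Proof.
  intros Hn.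
  rewrite <- rsum_scal.
  rewrite (rsum_ext n (fun i => t ^ 2 * (rowsum A n i - rowsum_mean A n) ^ 2)
     (fun i => (t * rowsum A n i - rsum n (fun k => t * rowsum A n k) / INR n)^2)).
  2:{ intros. rewrite rsum_scal. unfold rowsum_mean. unfold Rdiv. ring. }
  eapply Rle_trans; [apply (var_min n (fun i => t * rowsum A n i) a Hn)|].
  rewrite <- !rsum_plus, <- rsum_scal. apply rsum_le. intros i Hi.
  replace (t * rowsum A n i - a) with ((m i - a) + (- e i) + (- S i)) by (rewrite ident; auto; ring).
  eapply Rle_trans; [apply sq3|]. right. ring.
Qed.

Lemma mean_ident : (0 < n)%nat ->
  a = t * rowsum_mean A n + rsum n e / INR n + rsum n S / INR n.
Proof.
  intros Hn. unfold a, mbar, rowsum_mean.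
  rewrite (rsum_ext n (fun i => mloc A n i x) (fun i => t * rowsum A n i + e i + S i))
    by (intros; apply ident; auto).
  rewrite !rsum_plus, rsum_scal. assert (0 < INR n) by (apply lt_0_INR; lia). field. lra.
Qed.

Lemma mean_sq (f : nat -> R) : (0 < n)%nat -> (rsum n f / INR n)^2 <= rsum n (fun i => f i ^ 2) / INR n.
Proof.
  intros Hn. assert (HN : 0 < INR n) by (apply lt_0_INR; lia).
  pose proof (rsum_cs n (fun _ => 1) f ltac:(intros; lra)).
  rewrite rsum_const in H.
  rewrite (rsum_ext n (fun i => 1 * f i) f) in H by (intros; ring).
  rewrite (rsum_ext n (fun i => 1 * f i ^ 2) (fun i => f i ^ 2)) in H by (intros; ring).
  replace ((rsum n f / INR n)^2) with ((rsum n f)^2 / (INR n * INR n)) by (field; lra).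
  apply Rmult_le_reg_r with (INR n * INR n); [nra|].
  unfold Rdiv. rewrite Rmult_assoc, Rinv_l by nra.
  replace (rsum n (fun i => f i ^ 2) * / INR n * (INR n * INR n)) with (INR n * rsum n (fun i => f i ^ 2))
    by (field; lra). lra.
Qed.

End TL.

Lemma sq_lt_abs y k : 0 < k -> y^2 < k^2 -> Rabs y < k.
Proof.
  intros Hk H. destruct (Rlt_dec (Rabs y) k); auto. exfalso.
  assert (k^2 <= y^2); [|lra].
  rewrite <- !Rsqr_pow2. apply Rsqr_le_abs_1. rewrite (Rabs_right k) by lra. lra.
Qed.

Lemma Rdiv_le_0_compat a b : 0 <= a -> 0 < b -> 0 <= a / b.
Proof. intros. unfold Rdiv. apply Rmult_le_pos; [lra|left; apply Rinv_0_lt_compat; lra]. Qed.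

Lemma T_lower gamma beta B c : 0 < gamma -> 0 < beta -> B <> 0 -> 0 < c ->
  exists tau0 eta0, 0 < tau0 /\ 0 < eta0 /\
  forall A n x, valid_coupling A -> (forall i, (i < n)%nat -> rowsum A n i <= gamma) ->
    (0 < n)%nat ->
    c <= rsum n (fun i => (rowsum A n i - rowsum_mean A n)^2) / INR n ->
    Tn A n x < tau0 ->
    eta0 <= rsum n (fun i => (Sloc A n beta B i x)^2) / INR n.
Proof.
  intros Hg Hb HB Hc.
  assert (HaB : 0 < Rabs B) by (apply Rabs_pos_lt; auto).
  set (kap := Rabs B / (6 * beta)).
  assert (Hk : 0 < kap) by (unfold kap; apply Rdiv_lt_0_compat; lra).
  set (t0 := tanh (Rabs B / 2)).
  assert (Ht0 : 0 < t0) by (apply tanh_pos; lra).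
  set (t1 := Rmin t0 (kap / (gamma + 1))).
  assert (Ht1 : 0 < t1) by (apply Rmin_pos; auto; apply Rdiv_lt_0_compat; lra).
  set (L := 1 + 16 * beta^2 * gamma^2).
  assert (HL : 1 <= L) by (unfold L; pose proof (pow2_ge_0 beta); pose proof (pow2_ge_0 gamma);
     assert (0 <= beta^2 * gamma^2) by (apply Rmult_le_pos; auto); lra).
  set (tau0 := Rmin (kap^2 / L) (t1^2 * c / (6 * L))).
  set (eta0 := Rmin (kap^2) (t1^2 * c / 6)).
  assert (Ht1c : 0 < t1^2 * c) by (apply Rmult_lt_0_compat; [apply pow_lt|]; auto).
  exists tau0, eta0. split; [|split].
  { apply Rmin_pos; apply Rdiv_lt_0_compat; try lra. apply pow_lt; auto. }
  { apply Rmin_pos; [apply pow_lt; auto|lra]. }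
  intros A n x hA hg Hn Hvar HT.
  destruct (Rle_dec eta0 (rsum n (fun i => (Sloc A n beta B i x)^2) / INR n)) as [Hok|HV]; auto.
  exfalso. apply Rnot_le_lt in HV.
  assert (HN : 0 < INR n) by (apply lt_0_INR; lia).
  pose proof (bound_e A n hA gamma hg beta B Hb x Hn) as He.
  pose proof (bound_var A n beta B x Hn) as Hv.
  pose proof (mean_ident A n beta B x Hn) as Hm.
  set (ef := fun i => rsum n (fun j => A n i j * (tanh (beta * mloc A n j x + B) - tanh (beta * mbar A n x + B)))) in *.
  pose proof (mean_sq n ef Hn) as Hme.
  pose proof (mean_sq n (fun i => Sloc A n beta B i x) Hn) as HmS.
  set (t := tanh (beta * mbar A n x + B)) in *.
  set (a := mbar A n x) in *.
  set (D := rsum n (fun i => (mloc A n i x - a)^2)) in *.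
  set (Ee := rsum n (fun i => ef i ^ 2)) in *.
  set (SS := rsum n (fun i => (Sloc A n beta B i x)^2)) in *.
  set (VR := rsum n (fun i => (rowsum A n i - rowsum_mean A n)^2)) in *.
  set (eb := rsum n ef / INR n) in *.
  set (Sb := rsum n (fun i => Sloc A n beta B i x) / INR n) in *.
  assert (HTd : Tn A n x = D / INR n) by reflexivity.
  set (T := Tn A n x) in *.
  assert (HD0 : 0 <= D) by (apply rsum_nonneg; intros; apply pow2_ge_0).
  assert (HT0 : 0 <= T) by (rewrite HTd; apply Rdiv_le_0_compat; lra).
  assert (HDT : D = T * INR n) by (rewrite HTd; field; lra).
  assert (HEe : Ee / INR n <= 16 * beta^2 * gamma^2 * T).
  { rewrite HTd. unfold Rdiv. replace (16 * beta ^ 2 * gamma ^ 2 * (D * / INR n)) with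
      ((16 * beta ^ 2 * gamma ^ 2 * D) * / INR n) by ring.
    apply Rmult_le_compat_r; [left; apply Rinv_0_lt_compat; lra|]. lra. }
  assert (HEe0 : 0 <= Ee / INR n) by (apply Rdiv_le_0_compat; [apply rsum_nonneg; intros; apply pow2_ge_0|lra]).
  assert (HSS0 : 0 <= SS / INR n) by (apply Rdiv_le_0_compat; [apply rsum_nonneg; intros; apply pow2_ge_0|lra]).
  assert (Hbg : 0 <= 16 * beta^2 * gamma^2) by (pose proof (pow2_ge_0 beta); pose proof (pow2_ge_0 gamma);
     assert (0 <= beta^2 * gamma^2) by (apply Rmult_le_pos; auto); lra).
  assert (HTt : T < tau0) by exact HT.
  assert (Htau1 : tau0 <= kap^2 / L) by apply Rmin_l.
  assert (Htau2 : tau0 <= t1^2 * c / (6 * L)) by apply Rmin_r.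
  assert (Heta1 : eta0 <= kap^2) by apply Rmin_l.
  assert (Heta2 : eta0 <= t1^2 * c / 6) by apply Rmin_r.
  assert (HLT : L * T < kap^2).
  { apply Rlt_le_trans with (L * tau0). { apply Rmult_lt_compat_l; lra. }
    apply Rle_trans with (L * (kap^2 / L)). { apply Rmult_le_compat_l; lra. }
    right. field. lra. }
  assert (HEk : Ee / INR n < kap^2).
  { apply Rle_lt_trans with (16 * beta^2 * gamma^2 * T); auto.
    apply Rle_lt_trans with (L * T); auto. unfold L. nra. }
  assert (Hta : t1 <= Rabs t).
  { destruct (Rle_dec t1 (Rabs t)) as [ok|Hlt]; auto. apply Rnot_le_lt in Hlt. exfalso.
    assert (Hgt : Rabs t * (gamma + 1) < kap).
    { apply Rlt_le_trans with (t1 * (gamma + 1)). { apply Rmult_lt_compat_r; lra. }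
      apply Rle_trans with (kap / (gamma + 1) * (gamma + 1)).
      { apply Rmult_le_compat_r; [lra|apply Rmin_r]. }
      right. field. lra. }
    assert (Heb : Rabs eb < kap) by (apply sq_lt_abs; auto; lra).
    assert (HSb : Rabs Sb < kap) by (apply sq_lt_abs; auto; lra).
    assert (HRm : 0 <= rowsum_mean A n <= gamma).
    { unfold rowsum_mean. split.
      - apply Rdiv_le_0_compat; [apply rsum_nonneg; intros; apply rowsum_nn; auto|lra].
      - apply Rmult_le_reg_r with (INR n); auto. unfold Rdiv. rewrite Rmult_assoc, Rinv_l by lra.
        rewrite Rmult_1_r. replace (gamma * INR n) with (rsum n (fun _ => gamma)) by (rewrite rsum_const; ring).
        apply rsum_le. auto. }
    assert (Ha : Rabs a < 3 * kap).
    { rewrite Hm. eapply Rle_lt_trans; [apply Rabs_triang|].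
      eapply Rle_lt_trans; [apply Rplus_le_compat_r; apply Rabs_triang|].
      rewrite Rabs_mult. rewrite (Rabs_right (rowsum_mean A n)) by lra.
      assert (Rabs t * rowsum_mean A n <= Rabs t * gamma) by (apply Rmult_le_compat_l; [apply Rabs_pos|lra]).
      pose proof (Rabs_pos t). nra. }
    assert (Hba : Rabs (beta * a) < Rabs B / 2).
    { rewrite Rabs_mult, (Rabs_right beta) by lra.
      apply Rlt_le_trans with (beta * (3 * kap)). { apply Rmult_lt_compat_l; auto. }
      right. unfold kap. field. lra. }
    assert (Hy : Rabs B / 2 <= Rabs (beta * a + B)).
    { pose proof (Rabs_triang_inv B (- (beta * a))). rewrite Rabs_Ropp in H.
      replace (B - - (beta * a)) with (beta * a + B) in H by ring. lra. }
    pose proof (tanh_abs_ge (beta * a + B) (Rabs B / 2) ltac:(lra) Hy).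
    fold t in H. change (tanh (Rabs B / 2)) with t0 in H. assert (t1 <= t0) by apply Rmin_l. lra. }
  assert (Ht2 : t1^2 <= t^2).
  { rewrite <- !Rsqr_pow2. apply Rsqr_le_abs_1. rewrite (Rabs_right t1) by lra. auto. }
  assert (HVR : c * INR n <= VR).
  { apply Rmult_le_reg_r with (/ INR n); [apply Rinv_0_lt_compat; lra|].
    rewrite Rmult_assoc, Rinv_r, Rmult_1_r by lra. exact Hvar. }
  assert (Hmain : t1^2 * c <= 3 * (T + Ee / INR n + SS / INR n)).
  { apply Rmult_le_reg_r with (INR n); auto.
    apply Rle_trans with (t^2 * VR).
    - rewrite Rmult_assoc. apply Rmult_le_compat; try lra. apply pow2_ge_0.
      apply Rmult_le_pos; lra.
    - eapply Rle_trans; [exact Hv|]. right. rewrite HDT. field. lra. }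
  assert (3 * (T + Ee / INR n + SS / INR n) <= 3 * L * T + 3 * (SS / INR n)).
  { unfold L. nra. }
  assert (3 * L * T < t1^2 * c / 2).
  { apply Rlt_le_trans with (3 * L * tau0). { apply Rmult_lt_compat_l; lra. }
    apply Rle_trans with (3 * L * (t1 ^ 2 * c / (6 * L))). { apply Rmult_le_compat_l; lra. }
    right. field. lra. }
  lra.
Qed.

Lemma rsum_zero_each n f : (forall i, (i < n)%nat -> 0 <= f i) -> rsum n f = 0 ->
  forall i, (i < n)%nat -> f i = 0.
Proof.
  intros H Hs i Hi. rewrite (rsum_split n i f Hi) in Hs.
  assert (0 <= rsum n (fun k => if Nat.eqb k i then 0 else f k)).
  { apply rsum_nonneg. intros k Hk. destruct (Nat.eqb k i); [lra|auto]. }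
  specialize (H i Hi). lra.
Qed.

Section PL.
Variable A : coupling.
Variable n : nat.
Variable x : nat -> R.
Variable gamma : R.
Hypothesis Hn : (0 < n)%nat.
Hypothesis Hm : forall i, (i < n)%nat -> Rabs (mloc A n i x) <= gamma.

Definition G1 b c := rsum n (fun i => mloc A n i x * (x i - tanh (b * mloc A n i x + c))).
Definition G2 b c := rsum n (fun i => x i - tanh (b * mloc A n i x + c)).

Lemma PL_root_iff b c : PL_root A n x b c <-> G1 b c = 0 /\ G2 b c = 0.
Proof. reflexivity. Qed.

Lemma G_ident b c b' c' :
  (b' - b) * (G1 b c - G1 b' c') + (c' - c) * (G2 b c - G2 b' c') =
  rsum n (fun i => (tanh (b' * mloc A n i x + c') - tanh (b * mloc A n i x + c)) *
                   ((b' * mloc A n i x + c') - (b * mloc A n i x + c))).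
Proof.
  unfold G1, G2. rewrite <- !rsum_minus, <- !rsum_scal, <- rsum_plus.
  apply rsum_ext. intros. ring.
Qed.

Lemma quadvar al de :
  al^2 * rsum n (fun i => (mloc A n i x - mbar A n x)^2) <=
  rsum n (fun i => (al * mloc A n i x + de)^2).
Proof.
  pose proof (var_min n (fun i => al * mloc A n i x) (- de) Hn).
  rewrite rsum_scal in H.
  rewrite <- rsum_scal. unfold mbar.
  rewrite (rsum_ext n (fun i => al ^ 2 * (mloc A n i x - rsum n (fun i0 => mloc A n i0 x) / INR n) ^ 2)
    (fun i => (al * mloc A n i x - al * rsum n (fun i0 => mloc A n i0 x) / INR n) ^ 2))
    by (intros; unfold Rdiv; ring).
  eapply Rle_trans; [exact H|]. right. apply rsum_ext. intros. ring.
Qed.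

Lemma PL_unique b c b' c' : 0 < Tn A n x -> PL_root A n x b c -> PL_root A n x b' c' ->
  b' = b /\ c' = c.
Proof.
  intros HT [H1 H2] [H1' H2'].
  pose proof (G_ident b c b' c') as HI. unfold G1, G2 in HI.
  rewrite H1, H2, H1', H2' in HI.
  set (f := fun i => (tanh (b' * mloc A n i x + c') - tanh (b * mloc A n i x + c)) *
                   ((b' * mloc A n i x + c') - (b * mloc A n i x + c))) in HI.
  assert (Hz : forall i, (i < n)%nat -> f i = 0).
  { apply rsum_zero_each. intros; apply tanh_prod_nonneg. rewrite <- HI. ring. }
  assert (Hy : forall i, (i < n)%nat -> (b' - b) * mloc A n i x + (c' - c) = 0).
  { intros i Hi. pose proof (Hz i Hi) as Hzi. unfold f in Hzi. apply tanh_prod_zero in Hzi.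
    replace ((b' - b) * mloc A n i x + (c' - c)) with
      ((b' * mloc A n i x + c') - (b * mloc A n i x + c)) by ring. lra. }
  pose proof (quadvar (b' - b) (c' - c)).
  rewrite (rsum_ext n (fun i => ((b' - b) * mloc A n i x + (c' - c))^2) (fun _ => 0)) in H
    by (intros i Hi; rewrite Hy; auto; ring).
  rewrite rsum_const in H.
  assert (HN : 0 < INR n) by (apply lt_0_INR; lia).
  assert (HD : 0 < rsum n (fun i => (mloc A n i x - mbar A n x)^2)).
  { unfold Tn in HT. apply Rmult_lt_reg_r with (/ INR n); [apply Rinv_0_lt_compat; lra|].
    rewrite Rmult_0_l. exact HT. }
  assert (Hb : b' - b = 0).
  { destruct (Req_dec (b' - b) 0); auto. exfalso.
    assert (0 < (b' - b)^2) by (rewrite <- Rsqr_pow2; apply Rsqr_pos_lt; auto).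
    assert (0 < (b' - b)^2 * rsum n (fun i => (mloc A n i x - mbar A n x)^2)) by (apply Rmult_lt_0_compat; auto).
    lra. }
  split; [lra|]. specialize (Hy 0%nat Hn). rewrite Hb in Hy. lra.
Qed.

End PL.

Lemma rsum_abs_bound n f M : (forall i, (i < n)%nat -> Rabs (f i) <= M) -> Rabs (rsum n f) <= INR n * M.
Proof.
  intros H. eapply Rle_trans; [apply rsum_abs|]. rewrite <- rsum_const. apply rsum_le. auto.
Qed.

Definition clamp lo hi b := Rmax lo (Rmin b hi).

Lemma clamp_in lo hi b : lo <= hi -> lo <= clamp lo hi b <= hi.
Proof. intros. unfold clamp, Rmax, Rmin. repeat destruct Rle_dec; lra. Qed.

Lemma clamp_id lo hi b : lo <= b <= hi -> clamp lo hi b = b.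
Proof. intros. unfold clamp, Rmax, Rmin. repeat destruct Rle_dec; lra. Qed.

Lemma clamp_lip lo hi b b' : lo <= hi -> Rabs (clamp lo hi b - clamp lo hi b') <= Rabs (b - b').
Proof. intros. unfold clamp, Rmax, Rmin. repeat destruct Rle_dec; unfold Rabs; repeat destruct Rcase_abs; lra. Qed.

Section PLE.
Variable A : coupling.
Variable n : nat.
Variable x : nat -> R.
Variables gamma beta B : R.
Hypothesis Hn : (0 < n)%nat.
Hypothesis Hm : forall i, (i < n)%nat -> Rabs (mloc A n i x) <= gamma.
Hypothesis Hg : 0 < gamma.
Hypothesis Hb : 0 < beta.

Let G1l := G1 A n x.
Let G2l := G2 A n x.
Let N := INR n.
Lemma HN : 0 < N.
Proof. apply lt_0_INR; lia. Qed.

Definition Kr := (beta + 1) * gamma + Rabs B + 1.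

Lemma range b c i : Rabs (b - beta) <= 1 -> Rabs (c - B) <= 1 -> (i < n)%nat ->
  Rabs (b * mloc A n i x + c) <= Kr.
Proof.
  intros H1 H2 Hi. unfold Kr. eapply Rle_trans; [apply Rabs_triang|].
  rewrite Rabs_mult. pose proof (Hm i Hi).
  assert (Rabs b <= beta + 1).
  { replace b with ((b - beta) + beta) by ring. eapply Rle_trans; [apply Rabs_triang|].
    rewrite (Rabs_right beta) by lra. lra. }
  assert (Rabs c <= Rabs B + 1).
  { replace c with ((c - B) + B) by ring. eapply Rle_trans; [apply Rabs_triang|]. lra. }
  assert (Rabs b * Rabs (mloc A n i x) <= (beta + 1) * gamma) by
    (apply Rmult_le_compat; auto using Rabs_pos). lra.
Qed.

Lemma G2_lip_b b b' c : Rabs (G2l b c - G2l b' c) <= N * (4 * gamma * Rabs (b - b')).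
Proof.
  unfold G2l, G2. rewrite <- rsum_minus. apply rsum_abs_bound. intros i Hi.
  replace (x i - tanh (b * mloc A n i x + c) - (x i - tanh (b' * mloc A n i x + c))) with
    (- (tanh (b * mloc A n i x + c) - tanh (b' * mloc A n i x + c))) by ring.
  rewrite Rabs_Ropp. eapply Rle_trans; [apply tanh_lip|].
  replace (b * mloc A n i x + c - (b' * mloc A n i x + c)) with ((b - b') * mloc A n i x) by ring.
  rewrite Rabs_mult. pose proof (Hm i Hi). pose proof (Rabs_pos (b - b')).
  assert (Rabs (b - b') * Rabs (mloc A n i x) <= Rabs (b - b') * gamma) by (apply Rmult_le_compat_l; auto).
  lra.
Qed.

Lemma G2_lip_c b c c' : Rabs (G2l b c - G2l b c') <= N * (4 * Rabs (c - c')).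
Proof.
  unfold G2l, G2. rewrite <- rsum_minus. apply rsum_abs_bound. intros i Hi.
  replace (x i - tanh (b * mloc A n i x + c) - (x i - tanh (b * mloc A n i x + c'))) with
    (- (tanh (b * mloc A n i x + c) - tanh (b * mloc A n i x + c'))) by ring.
  rewrite Rabs_Ropp. eapply Rle_trans; [apply tanh_lip|].
  replace (b * mloc A n i x + c - (b * mloc A n i x + c')) with (c - c') by ring. lra.
Qed.

Lemma G2_slope K b c c' : (forall i, (i < n)%nat -> Rabs (b * mloc A n i x + c) <= K) ->
  (forall i, (i < n)%nat -> Rabs (b * mloc A n i x + c') <= K) -> c <= c' ->
  N * (slopeK K * (c' - c)) <= G2l b c - G2l b c'.
Proof.
  intros H1 H2 Hc. unfold G2l, G2, N. rewrite <- rsum_minus, <- rsum_const. apply rsum_le.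
  intros i Hi. pose proof (tanh_slope_le K (b * mloc A n i x + c') (b * mloc A n i x + c) (H2 i Hi) (H1 i Hi)).
  replace (b * mloc A n i x + c' - (b * mloc A n i x + c)) with (c' - c) in H by ring.
  lra.
Qed.

Lemma G1_lip b c b' c' : Rabs (G1l b c - G1l b' c') <= N * (gamma * (4 * (gamma * Rabs (b - b') + Rabs (c - c')))).
Proof.
  unfold G1l, G1. rewrite <- rsum_minus. apply rsum_abs_bound. intros i Hi.
  replace (mloc A n i x * (x i - tanh (b * mloc A n i x + c)) - mloc A n i x * (x i - tanh (b' * mloc A n i x + c')))
    with (mloc A n i x * (tanh (b' * mloc A n i x + c') - tanh (b * mloc A n i x + c))) by ring.
  rewrite Rabs_mult. apply Rmult_le_compat; auto using Rabs_pos.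
  eapply Rle_trans; [apply tanh_lip|]. apply Rmult_le_compat_l; [lra|].
  replace (b' * mloc A n i x + c' - (b * mloc A n i x + c)) with ((b' - b) * mloc A n i x + (c' - c)) by ring.
  eapply Rle_trans; [apply Rabs_triang|]. rewrite Rabs_mult.
  rewrite (Rabs_minus_sym b' b), (Rabs_minus_sym c' c).
  pose proof (Hm i Hi). pose proof (Rabs_pos (b - b')).
  assert (Rabs (b - b') * Rabs (mloc A n i x) <= gamma * Rabs (b - b')) by nra. lra.
Qed.

End PLE.

Lemma strong_mono A n x gamma beta B p c tau : (0 < n)%nat ->
  (forall i, (i < n)%nat -> Rabs (mloc A n i x) <= gamma) -> 0 < beta ->
  Rabs (p - beta) <= 1 -> Rabs (c - B) <= 1 -> tau <= Tn A n x ->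
  slopeK (Kr gamma beta B) * (p - beta)^2 * (INR n * tau) <=
  (p - beta) * (G1 A n x beta B - G1 A n x p c) + (c - B) * (G2 A n x beta B - G2 A n x p c).
Proof.
  intros Hn Hm Hb H1 H2 HT. rewrite G_ident.
  set (s := slopeK (Kr gamma beta B)). assert (Hs : 0 < s) by apply slopeK_pos.
  assert (HN : 0 < INR n) by (apply lt_0_INR; lia).
  apply Rle_trans with (rsum n (fun i => s * ((p * mloc A n i x + c) - (beta * mloc A n i x + B))^2)).
  2:{ apply rsum_le. intros i Hi. apply tanh_slope; apply (range A n x gamma beta B Hm Hb); auto;
      rewrite ?Rminus_diag, ?Rabs_R0; lra. }
  rewrite rsum_scal.
  rewrite (rsum_ext n (fun i => (p * mloc A n i x + c - (beta * mloc A n i x + B)) ^ 2)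
     (fun i => ((p - beta) * mloc A n i x + (c - B))^2)) by (intros; ring).
  pose proof (quadvar A n x Hn (p - beta) (c - B)).
  assert (HTn : INR n * Tn A n x = rsum n (fun i => (mloc A n i x - mbar A n x) ^ 2)) by (unfold Tn; field; lra).
  rewrite Rmult_assoc. apply Rmult_le_compat_l; [lra|].
  eapply Rle_trans; [|exact H]. rewrite <- HTn.
  apply Rmult_le_compat_l; [apply pow2_ge_0|]. apply Rmult_le_compat_l; lra.
Qed.

Definition s0c gamma beta B := slopeK (Kr gamma beta B).
Definition lamc gamma beta B tau :=
  ((1 + 8 * gamma / s0c gamma beta B) + 2 / s0c gamma beta B) / (s0c gamma beta B * tau) + 1.
Definition eps0c gamma beta B tau :=
  Rmin (1 / lamc gamma beta B tau) (s0c gamma beta B / (2 * (1 + 4 * gamma * lamc gamma beta B tau))).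
Definition Kcc gamma beta B tau :=
  lamc gamma beta B tau ^ 2 + (2 * (1 + 4 * gamma * lamc gamma beta B tau) / s0c gamma beta B) ^ 2.

Lemma eps0c_pos gamma beta B tau : 0 < gamma -> 0 < tau -> 0 < eps0c gamma beta B tau.
Proof.
  intros Hg Ht. unfold eps0c, lamc. pose proof (slopeK_pos (Kr gamma beta B)). fold (s0c gamma beta B) in H.
  set (s := s0c gamma beta B) in *.
  assert (0 < 8 * gamma / s) by (apply Rdiv_lt_0_compat; lra).
  assert (0 < 2 / s) by (apply Rdiv_lt_0_compat; lra).
  assert (0 < (1 + 8 * gamma / s + 2 / s) / (s * tau)) by (apply Rdiv_lt_0_compat; [lra|apply Rmult_lt_0_compat; lra]).
  set (l := (1 + 8 * gamma / s + 2 / s) / (s * tau) + 1) in *.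
  assert (0 < l) by (unfold l; lra). assert (0 < gamma * l) by (apply Rmult_lt_0_compat; lra).
  apply Rmin_pos; apply Rdiv_lt_0_compat; lra.
Qed.

Lemma PL_exist A n x gamma beta B tau eps : (0 < n)%nat ->
  (forall i, (i < n)%nat -> Rabs (mloc A n i x) <= gamma) -> 0 < gamma -> 0 < beta ->
  0 < tau -> tau <= Tn A n x -> 0 < eps -> eps <= eps0c gamma beta B tau ->
  Rabs (G1 A n x beta B) <= INR n * eps -> Rabs (G2 A n x beta B) <= INR n * eps ->
  exists b c, is_PLE A n x b c /\ (b - beta)^2 + (c - B)^2 <= Kcc gamma beta B tau * eps^2.
Proof.
  intros Hn Hm Hg Hb Ht HT He Heps HG1 HG2.
  assert (HN : 0 < INR n) by (apply lt_0_INR; lia).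
  set (N := INR n) in *.
  pose proof (slopeK_pos (Kr gamma beta B)) as Hs. fold (s0c gamma beta B) in Hs.
  unfold eps0c, Kcc, lamc in *.
  set (s := s0c gamma beta B) in *.
  set (bb := 1 + 8 * gamma / s). set (cc := 2 / s).
  assert (Hbb : 0 < bb) by (unfold bb; assert (0 < 8 * gamma / s) by (apply Rdiv_lt_0_compat; lra); lra).
  assert (Hcc : 0 < cc) by (apply Rdiv_lt_0_compat; lra).
  set (aa := s * tau). assert (Haa : 0 < aa) by (apply Rmult_lt_0_compat; lra).
  set (lam := (bb + cc) / aa + 1) in *.
  assert (Hl1 : 1 <= lam) by (unfold lam; assert (0 < (bb + cc) / aa) by (apply Rdiv_lt_0_compat; lra); lra).
  assert (Hal : aa * lam = bb + cc + aa) by (unfold lam; field; lra).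
  assert (HK : lam + 2 * (1 + 4 * gamma * lam) / s < aa * lam ^ 2).
  { replace (lam + 2 * (1 + 4 * gamma * lam) / s) with (lam * bb + cc) by (unfold bb, cc; field; lra).
    replace (aa * lam ^ 2) with ((aa * lam) * lam) by ring. rewrite Hal. nra. }
  set (q := 1 + 4 * gamma * lam). assert (Hq : 1 <= q) by (unfold q; nra).
  fold q in HK, Heps.
  set (r := lam * eps). set (rho := 2 * q * eps / s).
  assert (Hr0 : 0 < r) by (unfold r; nra).
  assert (Hrho0 : 0 < rho) by (unfold rho; apply Rdiv_lt_0_compat; nra).
  assert (Hr1 : r <= 1).
  { unfold r. assert (eps <= 1 / lam) by (eapply Rle_trans; [exact Heps|apply Rmin_l]).
    apply Rmult_le_reg_r with (/ lam); [apply Rinv_0_lt_compat; lra|].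
    rewrite Rmult_comm, <- Rmult_assoc, Rinv_l, Rmult_1_l by lra. unfold Rdiv in H. lra. }
  assert (Hrho1 : rho <= 1).
  { unfold rho. assert (eps <= s / (2 * q)) by (eapply Rle_trans; [exact Heps|apply Rmin_r]).
    apply Rmult_le_reg_r with s; auto. unfold Rdiv. rewrite Rmult_assoc, Rinv_l by lra.
    apply Rmult_le_reg_r with (/ (2 * q)); [apply Rinv_0_lt_compat; lra|].
    replace (2 * q * eps * 1 * / (2 * q)) with eps by (field; lra). unfold Rdiv in H. lra. }
  assert (Hsr : s * rho = 2 * q * eps) by (unfold rho; field; lra).
  assert (HG2' := abs_le_inv _ _ HG2). assert (HG1' := abs_le_inv _ _ HG1).
  assert (Hq0 : 0 < N * (q * eps)) by (apply Rmult_lt_0_compat; [lra|nra]).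
  assert (Hr4 : 0 <= gamma) by lra.
  assert (Hroot : forall p, Rabs (p - beta) <= r -> exists c, Rabs (c - B) <= rho /\ G2 A n x p c = 0).
  { intros p Hp.
    assert (Hrg : forall c, Rabs (c - B) <= 1 -> forall i, (i < n)%nat -> Rabs (p * mloc A n i x + c) <= Kr gamma beta B)
      by (intros; apply range; auto; lra).
    pose proof (G2_lip_b A n x gamma Hm p beta B) as Hl. fold N in Hl. apply abs_le_inv in Hl.
    assert (Hl' : N * (4 * gamma * Rabs (p - beta)) <= N * (4 * gamma * r))
      by (apply Rmult_le_compat_l; [lra|]; apply Rmult_le_compat_l; lra).
    assert (Heq : N * (4 * gamma * r) + N * eps - N * (2 * q * eps) = - (N * (q * eps)))
      by (unfold r, q; ring).
    assert (Hup : G2 A n x p (B + rho) < 0).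
    { pose proof (G2_slope A n x (Kr gamma beta B) p B (B + rho)) as Hsl.
      fold (s0c gamma beta B) in Hsl. fold s in Hsl.
      assert (N * (s * (B + rho - B)) <= G2 A n x p B - G2 A n x p (B + rho)).
      { apply Hsl.
        - intros i Hi. apply Hrg; auto. rewrite Rminus_diag, Rabs_R0. lra.
        - intros i Hi. apply Hrg; auto. replace (B + rho - B) with rho by ring. rewrite Rabs_right; lra.
        - lra. }
      replace (B + rho - B) with rho in H by ring. rewrite Hsr in H. lra. }
    assert (Hdown : 0 < G2 A n x p (B - rho)).
    { pose proof (G2_slope A n x (Kr gamma beta B) p (B - rho) B) as Hsl.
      fold (s0c gamma beta B) in Hsl. fold s in Hsl.
      assert (N * (s * (B - (B - rho))) <= G2 A n x p (B - rho) - G2 A n x p B).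
      { apply Hsl.
        - intros i Hi. apply Hrg; auto. replace (B - rho - B) with (- rho) by ring. rewrite Rabs_Ropp, Rabs_right; lra.
        - intros i Hi. apply Hrg; auto. rewrite Rminus_diag, Rabs_R0. lra.
        - lra. }
      replace (B - (B - rho)) with rho in H by ring. rewrite Hsr in H. lra. }
    assert (Hcont : continuity (fun c => - G2 A n x p c)).
    { apply (lip_cont _ (N * 4)); [lra|]. intros a0 b0.
      replace (- G2 A n x p a0 - - G2 A n x p b0) with (G2 A n x p b0 - G2 A n x p a0) by ring.
      eapply Rle_trans; [apply G2_lip_c|]. unfold N. rewrite Rabs_minus_sym. right; ring. }
    destruct (IVT _ (B - rho) (B + rho) Hcont ltac:(lra) ltac:(lra) ltac:(lra)) as [z [Hz1 Hz2]].
    exists z. split; [apply Rabs_le; lra|lra]. }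
  set (cl := clamp (beta - r) (beta + r)).
  assert (Hcl : forall b, beta - r <= cl b <= beta + r) by (intros; apply clamp_in; lra).
  assert (Hcl' : forall b, Rabs (cl b - beta) <= r) by (intros b; pose proof (Hcl b); apply Rabs_le; lra).
  set (cf := fun b => epsilon (inhabits 0) (fun c => Rabs (c - B) <= rho /\ G2 A n x (cl b) c = 0)).
  assert (Hcf : forall b, Rabs (cf b - B) <= rho /\ G2 A n x (cl b) (cf b) = 0).
  { intros b. unfold cf. apply epsilon_spec. apply Hroot. auto. }
  assert (Hcfl : forall b b', Rabs (cf b - cf b') <= (4 * gamma / s) * Rabs (b - b')).
  { intros b b'. destruct (Hcf b) as [H1 H2]. destruct (Hcf b') as [H1' H2'].
    pose proof (G2_lip_b A n x gamma Hm (cl b') (cl b) (cf b)) as Hl.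
    rewrite H2 in Hl. rewrite Rminus_0_r in Hl.
    pose proof (clamp_lip (beta - r) (beta + r) b' b ltac:(lra)) as Hc. fold cl in Hc.
    assert (Hrg : forall c, Rabs (c - B) <= 1 -> forall i, (i < n)%nat -> Rabs (cl b' * mloc A n i x + c) <= Kr gamma beta B)
      by (intros; apply range; auto; pose proof (Hcl' b'); lra).
    assert (Hmain : N * (s * Rabs (cf b - cf b')) <= Rabs (G2 A n x (cl b') (cf b))).
    { destruct (Rle_dec (cf b) (cf b')).
      - pose proof (G2_slope A n x (Kr gamma beta B) (cl b') (cf b) (cf b')) as Hsl.
        fold (s0c gamma beta B) in Hsl. fold s in Hsl. rewrite H2' in Hsl.
        rewrite Rabs_minus_sym, (Rabs_right (cf b' - cf b)) by lra.
        eapply Rle_trans; [|apply Rle_abs]. rewrite <- (Rminus_0_r (G2 A n x (cl b') (cf b))).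
        apply Hsl; auto; intros i Hi; apply Hrg; auto; lra.
      - pose proof (G2_slope A n x (Kr gamma beta B) (cl b') (cf b') (cf b)) as Hsl.
        fold (s0c gamma beta B) in Hsl. fold s in Hsl. rewrite H2' in Hsl.
        rewrite (Rabs_right (cf b - cf b')) by lra.
        rewrite <- Rabs_Ropp. eapply Rle_trans; [|apply Rle_abs].
        replace (- G2 A n x (cl b') (cf b)) with (0 - G2 A n x (cl b') (cf b)) by ring.
        apply Hsl; auto; try (intros i Hi; apply Hrg; auto; lra). lra. }
    assert (N * (s * Rabs (cf b - cf b')) <= N * (4 * gamma * Rabs (b' - b))).
    { eapply Rle_trans; [exact Hmain|]. eapply Rle_trans; [exact Hl|].
      apply Rmult_le_compat_l; [lra|]. apply Rmult_le_compat_l; lra. }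
    apply Rmult_le_reg_l in H; [|lra].
    rewrite (Rabs_minus_sym b' b) in H.
    apply Rmult_le_reg_l with s; auto. replace (s * (4 * gamma / s * Rabs (b - b'))) with (4 * gamma * Rabs (b - b'))
      by (field; lra). lra. }
  set (phi := fun b => G1 A n x (cl b) (cf b)).
  assert (Hcont : continuity (fun b => - phi b)).
  { apply (lip_cont _ (N * (gamma * (4 * (gamma + 4 * gamma / s))))).
    { assert (0 <= 4 * gamma / s) by (unfold Rdiv; apply Rmult_le_pos; [lra|left; apply Rinv_0_lt_compat; lra]). 
      apply Rmult_le_pos; [lra|]. apply Rmult_le_pos; lra. }
    intros b b'. replace (- phi b - - phi b') with (- (phi b - phi b')) by ring. rewrite Rabs_Ropp.
    unfold phi. eapply Rle_trans; [apply G1_lip; auto|].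
    pose proof (clamp_lip (beta - r) (beta + r) b b' ltac:(lra)) as Hc. fold cl in Hc.
    pose proof (Hcfl b b'). pose proof (Rabs_pos (b - b')).
    replace (N * (gamma * (4 * (gamma + 4 * gamma / s))) * Rabs (b - b')) with
      (N * (gamma * (4 * (gamma * Rabs (b - b') + 4 * gamma / s * Rabs (b - b'))))) by ring.
    apply Rmult_le_compat_l; [lra|]. apply Rmult_le_compat_l; [lra|]. apply Rmult_le_compat_l; [lra|].
    apply Rplus_le_compat; auto. apply Rmult_le_compat_l; lra. }
  assert (Hgap : N * eps * (r + rho) < s * r^2 * (N * tau)).
  { unfold r, rho. replace (s * (lam * eps)^2 * (N * tau)) with (N * eps^2 * (aa * lam^2)) by (unfold aa; ring).
    replace (N * eps * (lam * eps + 2 * q * eps / s)) with (N * eps^2 * (lam + 2 * q / s)) by (field; lra).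
    apply Rmult_lt_compat_l; [apply Rmult_lt_0_compat; [lra|apply pow_lt; lra]|]. unfold q in *. lra. }
  assert (Hsm : forall b, slopeK (Kr gamma beta B) * (cl b - beta)^2 * (N * tau) <=
      (cl b - beta) * (G1 A n x beta B - phi b) + (cf b - B) * (G2 A n x beta B - 0)).
  { intros b. destruct (Hcf b) as [H1 H2]. rewrite <- H2. unfold phi.
    apply strong_mono; auto; pose proof (Hcl' b); lra. }
  fold (s0c gamma beta B) in Hsm. fold s in Hsm.
  assert (Hp1 : phi (beta + r) < 0).
  { pose proof (Hsm (beta + r)) as H. 
    assert (Hcr : cl (beta + r) = beta + r) by (apply clamp_id; lra). rewrite Hcr in H.
    replace (beta + r - beta) with r in H by ring. destruct (Hcf (beta + r)) as [H1 _].
    assert (Hcg : (cf (beta + r) - B) * (G2 A n x beta B - 0) <= rho * (N * eps)).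
    { rewrite Rminus_0_r. eapply Rle_trans; [apply Rle_abs|]. rewrite Rabs_mult.
      apply Rmult_le_compat; auto using Rabs_pos. }
    assert (r * G1 A n x beta B <= r * (N * eps)) by (apply Rmult_le_compat_l; lra).
    assert (0 < - (r * phi (beta + r))) by nra.
    destruct (Rle_dec 0 (phi (beta + r))); [|lra]. nra. }
  assert (Hp2 : 0 < phi (beta - r)).
  { pose proof (Hsm (beta - r)) as H.
    assert (Hcr : cl (beta - r) = beta - r) by (apply clamp_id; lra). rewrite Hcr in H.
    replace (beta - r - beta) with (- r) in H by ring. destruct (Hcf (beta - r)) as [H1 _].
    assert (Hcg : (cf (beta - r) - B) * (G2 A n x beta B - 0) <= rho * (N * eps)).
    { rewrite Rminus_0_r. eapply Rle_trans; [apply Rle_abs|]. rewrite Rabs_mult.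
      apply Rmult_le_compat; auto using Rabs_pos. }
    assert (- r * G1 A n x beta B <= r * (N * eps)) by (replace (- r * G1 A n x beta B) with (r * (- G1 A n x beta B)) by ring; apply Rmult_le_compat_l; lra).
    replace ((- r)^2) with (r^2) in H by ring.
    assert (0 < r * phi (beta - r)) by nra.
    destruct (Rle_dec (phi (beta - r)) 0); [|lra]. nra. }
  destruct (IVT (fun b => - phi b) (beta - r) (beta + r) Hcont ltac:(lra) ltac:(lra) ltac:(lra)) as [bs [Hbs1 Hbs2]].
  assert (Hclb : cl bs = bs) by (apply clamp_id; lra).
  destruct (Hcf bs) as [Hc1 Hc2]. rewrite Hclb in Hc2.
  assert (Hroot1 : G1 A n x bs (cf bs) = 0) by (unfold phi in Hbs2; rewrite Hclb in Hbs2; lra).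
  exists bs, (cf bs). split.
  - split; [split; auto|]. intros b' c' Hr'. apply (PL_unique A n x Hn bs (cf bs) b' c'); [lra| |auto].
    split; auto.
  - assert ((bs - beta)^2 <= r^2).
    { rewrite <- !Rsqr_pow2. apply Rsqr_le_abs_1. rewrite (Rabs_right r) by lra. apply Rabs_le; lra. }
    assert ((cf bs - B)^2 <= rho^2).
    { rewrite <- !Rsqr_pow2. apply Rsqr_le_abs_1. rewrite (Rabs_right rho) by lra. auto. }
    replace ((lam ^ 2 + (2 * q / s) ^ 2) * eps ^ 2) with (r^2 + rho^2) by (unfold r, rho; field; lra).
    lra.
Qed.

Lemma prob_abs A n beta B (G : (nat -> R) -> R) t C : 0 < t ->
  lsum (configs n) (fun x => G x ^ 2 * weight A n beta B x) <= Zpart A n beta B * C ->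
  Prob A n beta B (fun x => t < Rabs (G x)) <= C / t^2.
Proof.
  intros Ht HC. pose proof (Z_pos A n beta B) as HZ.
  assert (Ht2 : 0 < t^2) by (apply pow_lt; lra).
  eapply Rle_trans.
  { apply (Prob_le A n beta B _ (fun x => t^2 <= G x ^ 2)). intros x _ H.
    rewrite <- !Rsqr_pow2. apply Rsqr_le_abs_1. rewrite (Rabs_right t) by lra. lra. }
  eapply Rle_trans; [apply markov; auto; intros; apply pow2_ge_0|].
  unfold Rdiv. apply Rle_trans with (Zpart A n beta B * C * / (Zpart A n beta B * t ^ 2)).
  - apply Rmult_le_compat_r; auto. left; apply Rinv_0_lt_compat; nra.
  - right. field. lra.
Qed.

Lemma moment_V A n (hA : valid_coupling A) gamma (hg : forall i, (i < n)%nat -> rowsum A n i <= gamma)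
  beta B (hb : 0 <= beta) : (0 < n)%nat ->
  lsum (configs n) (fun x => (rsum n (fun i => Sloc A n beta B i x ^ 2) / INR n) * weight A n beta B x) <=
  Zpart A n beta B * ((4 + 8 * beta * gamma) * (rsum n (fun i => rsum n (fun j => A n i j ^ 2)) / INR n)).
Proof.
  intros Hn. assert (HN : 0 < INR n) by (apply lt_0_INR; lia).
  assert (Hg0 : 0 <= gamma) by (pose proof (rowsum_nn A n hA 0%nat Hn); pose proof (hg 0%nat Hn); lra).
  rewrite (lsum_ext _ _ (fun x => / INR n * rsum n (fun i => Sloc A n beta B i x ^ 2 * weight A n beta B x))).
  2:{ intros x _. rewrite rsum_scal_r. unfold Rdiv. ring. }
  rewrite lsum_scal, lsum_rsum.
  apply Rle_trans with (/ INR n * rsum n (fun i => Zpart A n beta B * (4 * rsum n (fun j => A n i j ^ 2) +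
      8 * beta * rsum n (fun j => rsum n (fun k => A n i j * A n i k * A n k j))))).
  { apply Rmult_le_compat_l; [left; apply Rinv_0_lt_compat; lra|]. apply rsum_le. intros i Hi.
    apply moment_S; auto. }
  rewrite rsum_scal, rsum_plus, rsum_scal, rsum_scal.
  pose proof (triangle A n hA gamma hg).
  pose proof (Z_pos A n beta B).
  set (Q := rsum n (fun i => rsum n (fun j => A n i j ^ 2))) in *.
  set (Tr := rsum n (fun i => rsum n (fun j => rsum n (fun k => A n i j * A n i k * A n k j)))) in *.
  assert (8 * beta * Tr <= 8 * beta * (gamma * Q)) by (apply Rmult_le_compat_l; lra).
  unfold Rdiv. replace (Zpart A n beta B * ((4 + 8 * beta * gamma) * (Q * / INR n))) with
    (/ INR n * (Zpart A n beta B * (4 * Q + 8 * beta * (gamma * Q)))) by ring.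
  apply Rmult_le_compat_l; [left; apply Rinv_0_lt_compat; lra|].
  apply Rmult_le_compat_l; lra.
Qed.

Lemma Tn_le A n (hA : valid_coupling A) gamma (hg : forall i, (i < n)%nat -> rowsum A n i <= gamma) x :
  (0 < n)%nat -> spin n x -> Tn A n x <= gamma ^ 2.
Proof.
  intros Hn Hs. assert (HN : 0 < INR n) by (apply lt_0_INR; lia). unfold Tn, mbar.
  pose proof (var_min n (fun i => mloc A n i x) 0 Hn). simpl in H.
  apply Rmult_le_reg_r with (INR n); auto. unfold Rdiv. rewrite Rmult_assoc, Rinv_l, Rmult_1_r by lra.
  eapply Rle_trans; [exact H|]. rewrite Rmult_comm, <- rsum_const. apply rsum_le. intros i Hi.
  pose proof (mloc_bound A n hA gamma hg i x Hi Hs).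
  replace ((mloc A n i x - 0) * ((mloc A n i x - 0) * 1)) with (Rsqr (mloc A n i x)) by (unfold Rsqr; ring).
  replace (gamma ^ 2) with (Rsqr gamma) by (unfold Rsqr; ring).
  apply Rsqr_le_abs_1. rewrite (Rabs_right gamma); [lra|].
  pose proof (Rabs_pos (mloc A n i x)). lra.
Qed.

Theorem theorem2 (A : coupling)
  (hA : valid_coupling A) (hC1 : cond_C1 A) (hmf : mean_field A)
  (hirr : irregular A) (beta B : R) (hbeta : 0 < beta) (hB : B <> 0) :
  (* T_n(X) = O_p(1) *)
  (forall eps, 0 < eps -> exists M, exists N, forall n, (N <= n)%nat ->
      Prob A n beta B (fun x => M < Tn A n x) < eps) /\
  (* 1 / T_n(X) = O_p(1) *)
  (forall eps, 0 < eps -> exists M, 0 < M /\ exists N, forall n, (N <= n)%nat ->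
      Prob A n beta B (fun x => M * Tn A n x < 1) < eps) /\
  (* the PLE exists with probability tending to one *)
  Un_cv (fun n => Prob A n beta B (PLE_exists A n)) 1 /\
  (* (beta_hat - beta)^2 + (B_hat - B)^2 = O_p(1/n) *)
  (forall eps, 0 < eps -> exists M, exists N, forall n, (N <= n)%nat ->
      Prob A n beta B (fun x => exists b c, is_PLE A n x b c /\
          M / INR n < (b - beta) ^ 2 + (c - B) ^ 2) < eps).
Proof.
  destruct hC1 as [g0 Hg0].
  set (gamma := Rabs g0 + 1).
  assert (Hgam : 0 < gamma) by (unfold gamma; pose proof (Rabs_pos g0); lra).
  assert (hg : forall n i, (i < n)%nat -> rowsum A n i <= gamma).
  { intros n i Hi. pose proof (Rle_abs g0). specialize (Hg0 n i Hi). unfold gamma. lra. }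
  destruct hirr as [c [Hc [N0 HN0]]].
  destruct (T_lower gamma beta B c Hgam hbeta hB Hc) as [tau0 [eta0 [Ht0 [He0 HTL]]]].
  set (CV := 4 + 8 * beta * gamma).
  assert (HCV : 0 < CV) by (unfold CV; assert (0 < beta * gamma) by (apply Rmult_lt_0_compat; lra); lra).
  assert (probT : forall delta, 0 < delta -> exists N, forall n, (N <= n)%nat ->
            Prob A n beta B (fun x => Tn A n x < tau0) < delta).
  { intros delta Hd.
    assert (Hdd : delta * eta0 / (2 * CV) > 0) by (apply Rlt_gt, Rdiv_lt_0_compat; [apply Rmult_lt_0_compat|]; lra).
    destruct (hmf _ Hdd) as [N1 HN1].
    exists (max (max N0 N1) 1). intros n Hn.
    assert (Hn0 : (0 < n)%nat) by lia.
    assert (HN : 0 < INR n) by (apply lt_0_INR; lia).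
    pose proof (Z_pos A n beta B) as HZ.
    eapply Rle_lt_trans.
    { apply (Prob_le A n beta B _ (fun x => eta0 <= rsum n (fun i => Sloc A n beta B i x ^ 2) / INR n)).
      intros x _ HT. apply (HTL A n x hA (hg n) Hn0 (HN0 n ltac:(lia)) HT). }
    eapply Rle_lt_trans.
    { apply markov; auto. intros. apply Rdiv_le_0_compat; [apply rsum_nonneg; intros; apply pow2_ge_0|exact HN]. }
    pose proof (moment_V A n hA gamma (hg n) beta B ltac:(lra) Hn0) as HM.
    set (q := rsum n (fun i => rsum n (fun j => A n i j ^ 2)) / INR n) in *.
    assert (Hq0 : 0 <= q) by (apply Rdiv_le_0_compat; [apply rsum_nonneg; intros;
      apply rsum_nonneg; intros; apply pow2_ge_0|exact HN]).
    assert (Hq : q < delta * eta0 / (2 * CV)).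
    { specialize (HN1 n ltac:(lia)). unfold R_dist in HN1. fold q in HN1. rewrite Rminus_0_r, Rabs_right in HN1 by lra.
      exact HN1. }
    apply Rle_lt_trans with (Zpart A n beta B * (CV * q) / (Zpart A n beta B * eta0)).
    { unfold Rdiv. apply Rmult_le_compat_r; [left; apply Rinv_0_lt_compat; nra|]. exact HM. }
    replace (Zpart A n beta B * (CV * q) / (Zpart A n beta B * eta0)) with (CV * q / eta0) by (field; lra).
    apply Rle_lt_trans with (CV * (delta * eta0 / (2 * CV)) / eta0).
    { unfold Rdiv. apply Rmult_le_compat_r; [left; apply Rinv_0_lt_compat; lra|].
      apply Rmult_le_compat_l; lra. }
    replace (CV * (delta * eta0 / (2 * CV)) / eta0) with (delta / 2) by (field; lra). lra. }
  assert (HG2eq : forall n, lsum (configs n) (fun x => G2 A n x beta B ^ 2 * weight A n beta B x) =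
     lsum (configs n) (fun x => (rsum n (fun j => 1 * (x j - uu A n beta B x j))) ^ 2 * weight A n beta B x)).
  { intros n. apply lsum_ext. intros x _. f_equal. f_equal. unfold G2. apply rsum_ext. intros. unfold uu. ring. }
  set (C1 := 4 * gamma ^ 2 + (4 * gamma + 8 * beta * gamma ^ 2) * gamma).
  assert (HC1 : 0 <= C1) by (unfold C1; assert (0 <= beta * gamma^2) by (apply Rmult_le_pos; [lra|apply pow2_ge_0]);
     assert (0 <= gamma ^ 2) by apply pow2_ge_0; nra).
  assert (HM1 : forall n, (0 < n)%nat -> lsum (configs n) (fun x => G1 A n x beta B ^ 2 * weight A n beta B x)
      <= Zpart A n beta B * (C1 * INR n)).
  { intros n Hn. eapply Rle_trans; [exact (moment_g1 A n hA gamma (hg n) beta B ltac:(lra) Hn)|].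
    right. unfold C1. ring. }
  assert (HM2 : forall n, lsum (configs n) (fun x => G2 A n x beta B ^ 2 * weight A n beta B x)
      <= Zpart A n beta B * (CV * INR n)).
  { intros n. rewrite HG2eq. eapply Rle_trans; [exact (moment_g2 A n hA gamma (hg n) beta B ltac:(lra))|].
    right. unfold CV. ring. }
  assert (Hbad : forall n t, (0 < n)%nat -> 0 < t ->
     Prob A n beta B (fun x => Tn A n x < tau0 \/ INR n * t < Rabs (G1 A n x beta B) \/ INR n * t < Rabs (G2 A n x beta B))
     <= Prob A n beta B (fun x => Tn A n x < tau0) + (C1 + CV) / (INR n * t ^ 2)).
  { intros n t Hn Ht. assert (HN : 0 < INR n) by (apply lt_0_INR; lia).
    eapply Rle_trans; [apply (Prob_union3 A n beta B _ (fun x => Tn A n x < tau0)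
       (fun x => INR n * t < Rabs (G1 A n x beta B)) (fun x => INR n * t < Rabs (G2 A n x beta B))); auto|].
    assert (0 < INR n * t) by (apply Rmult_lt_0_compat; lra).
    pose proof (prob_abs A n beta B (fun x => G1 A n x beta B) (INR n * t) (C1 * INR n) H (HM1 n Hn)).
    pose proof (prob_abs A n beta B (fun x => G2 A n x beta B) (INR n * t) (CV * INR n) H (HM2 n)).
    replace ((C1 + CV) / (INR n * t ^ 2)) with (C1 * INR n / (INR n * t) ^ 2 + CV * INR n / (INR n * t) ^ 2)
      by (field; lra).
    lra. }
  split; [|split; [|split]].
  -
    intros eps Heps. exists (gamma ^ 2), 1%nat. intros n Hn.
    rewrite Prob_false; [lra|]. intros x Hs H.
    pose proof (Tn_le A n hA gamma (hg n) x ltac:(lia) Hs). lra.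
  -
    intros eps Heps. destruct (probT eps Heps) as [N HN]. exists (/ tau0). split.
    { apply Rinv_0_lt_compat; auto. }
    exists N. intros n Hn. eapply Rle_lt_trans; [|apply (HN n Hn)].
    apply Prob_le. intros x _ H.
    replace (Tn A n x) with (tau0 * (/ tau0 * Tn A n x)) by (field; lra).
    apply Rlt_le_trans with (tau0 * 1); [apply Rmult_lt_compat_l; auto|lra].
  -
    intros eps Heps.
    set (e0 := eps0c gamma beta B tau0). pose proof (eps0c_pos gamma beta B tau0 Hgam Ht0) as He0p. fold e0 in He0p.
    destruct (probT (eps / 2) ltac:(lra)) as [N1 HN1].
    destruct (INR_unbounded (2 * (C1 + CV) / (e0 ^ 2 * eps))) as [N2 HN2].
    exists (max (max N1 N2) 1). intros n Hn.
    assert (Hn0 : (0 < n)%nat) by lia. assert (HN : 0 < INR n) by (apply lt_0_INR; lia).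
    assert (HN2' : INR N2 <= INR n) by (apply le_INR; lia).
    pose proof (Prob_le_1 A n beta B (PLE_exists A n)).
    pose proof (Prob_compl A n beta B (PLE_exists A n)
       (fun x => Tn A n x < tau0 \/ INR n * e0 < Rabs (G1 A n x beta B) \/ INR n * e0 < Rabs (G2 A n x beta B))) as Hcm.
    assert (Hc' : 1 - Prob A n beta B (fun x => Tn A n x < tau0 \/ INR n * e0 < Rabs (G1 A n x beta B) \/
        INR n * e0 < Rabs (G2 A n x beta B)) <= Prob A n beta B (PLE_exists A n)).
    { apply Hcm. intros x Hs Hnb.
      assert (HT : tau0 <= Tn A n x) by (destruct (Rlt_dec (Tn A n x) tau0); [tauto|lra]).
      assert (H1 : Rabs (G1 A n x beta B) <= INR n * e0) by (destruct (Rlt_dec (INR n * e0) (Rabs (G1 A n x beta B))); [tauto|lra]).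
      assert (H2 : Rabs (G2 A n x beta B) <= INR n * e0) by (destruct (Rlt_dec (INR n * e0) (Rabs (G2 A n x beta B))); [tauto|lra]).
      assert (Hm : forall i, (i < n)%nat -> Rabs (mloc A n i x) <= gamma) by (intros; apply mloc_bound; auto).
      destruct (PL_exist A n x gamma beta B tau0 e0 Hn0 Hm Hgam hbeta Ht0 HT He0p (Rle_refl _) H1 H2)
        as [b [c' [Hp _]]].
      exists b, c'. exact Hp. }
    pose proof (Hbad n e0 Hn0 He0p).
    specialize (HN1 n ltac:(lia)).
    assert (Hsmall : (C1 + CV) / (INR n * e0 ^ 2) < eps / 2).
    { assert (He02 : 0 < e0 ^ 2) by (apply pow_lt; lra).
      assert (2 * (C1 + CV) / (e0 ^ 2 * eps) < INR n) by lra.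
      apply Rmult_lt_reg_r with (INR n * e0 ^ 2 * 2 / eps); [apply Rdiv_lt_0_compat; [nra|lra]|].
      replace ((C1 + CV) / (INR n * e0 ^ 2) * (INR n * e0 ^ 2 * 2 / eps)) with (2 * (C1 + CV) / eps) by (field; split; lra).
      replace (eps / 2 * (INR n * e0 ^ 2 * 2 / eps)) with (INR n * e0 ^ 2) by (field; lra).
      apply Rmult_lt_reg_r with (/ e0 ^ 2); [apply Rinv_0_lt_compat; lra|].
      replace (INR n * e0 ^ 2 * / e0 ^ 2) with (INR n) by (field; lra).
      replace (2 * (C1 + CV) / eps * / e0 ^ 2) with (2 * (C1 + CV) / (e0 ^ 2 * eps)) by (field; lra). lra. }
    unfold R_dist. rewrite Rabs_left1 by lra. lra.
  -
    intros eps Heps.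
    set (e0 := eps0c gamma beta B tau0). pose proof (eps0c_pos gamma beta B tau0 Hgam Ht0) as He0p. fold e0 in He0p.
    set (K := 3 * (C1 + CV) / eps + 1).
    assert (HK0 : 0 < 3 * (C1 + CV) / eps) by (apply Rdiv_lt_0_compat; lra).
    assert (HK : 0 < K) by (unfold K; lra).
    exists (Kcc gamma beta B tau0 * K).
    destruct (probT (eps / 3) ltac:(lra)) as [N1 HN1].
    destruct (INR_unbounded (K / e0 ^ 2)) as [N2 HN2].
    exists (max (max N1 N2) 1). intros n Hn.
    assert (Hn0 : (0 < n)%nat) by lia. assert (HN : 0 < INR n) by (apply lt_0_INR; lia).
    assert (HN2' : INR N2 <= INR n) by (apply le_INR; lia).
    set (en := sqrt (K / INR n)).
    assert (HKn : 0 < K / INR n) by (apply Rdiv_lt_0_compat; lra).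
    assert (Hen : 0 < en) by (apply sqrt_lt_R0; auto).
    assert (Hen2 : en ^ 2 = K / INR n) by (unfold en; simpl; rewrite Rmult_1_r; apply sqrt_sqrt; lra).
    assert (He02 : 0 < e0 ^ 2) by (apply pow_lt; lra).
    assert (Hene : en <= e0).
    { destruct (Rle_dec en e0) as [ok|Hlt]; auto. exfalso. apply Rnot_le_lt in Hlt.
      assert (e0 ^ 2 < en ^ 2) by (simpl; rewrite !Rmult_1_r; apply Rmult_le_0_lt_compat; lra).
      rewrite Hen2 in H.
      assert (K / e0 ^ 2 < INR n) by lra.
      apply Rmult_lt_compat_r with (r := e0 ^ 2) in H0; auto.
      replace (K / e0 ^ 2 * e0 ^ 2) with K in H0 by (field; lra).
      apply Rmult_lt_compat_r with (r := INR n) in H; auto.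
      replace (K / INR n * INR n) with K in H by (field; lra). nra. }
    eapply Rle_lt_trans.
    { apply (Prob_le A n beta B _ (fun x => Tn A n x < tau0 \/ INR n * en < Rabs (G1 A n x beta B) \/
          INR n * en < Rabs (G2 A n x beta B))).
      intros x Hs [b [c' [Hp Hd]]].
      destruct (Rlt_dec (Tn A n x) tau0) as [h|h]; [left; exact h|].
      destruct (Rlt_dec (INR n * en) (Rabs (G1 A n x beta B))) as [h1|h1]; [right; left; exact h1|].
      destruct (Rlt_dec (INR n * en) (Rabs (G2 A n x beta B))) as [h2|h2]; [right; right; exact h2|].
      exfalso.
      assert (Hm : forall i, (i < n)%nat -> Rabs (mloc A n i x) <= gamma) by (intros; apply mloc_bound; auto).
      destruct (PL_exist A n x gamma beta B tau0 en Hn0 Hm Hgam hbeta Ht0 ltac:(lra) Hen Hene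
         ltac:(lra) ltac:(lra)) as [b0 [c0 [[Hr0 Hu0] Hd0]]].
      destruct Hp as [Hr _]. destruct (Hu0 b c' Hr) as [-> ->].
      rewrite Hen2 in Hd0.
      replace (Kcc gamma beta B tau0 * (K / INR n)) with (Kcc gamma beta B tau0 * K / INR n) in Hd0
        by (field; lra). lra. }
    pose proof (Hbad n en Hn0 Hen).
    specialize (HN1 n ltac:(lia)).
    assert (Hsmall : (C1 + CV) / (INR n * en ^ 2) < eps / 3 * 2).
    { rewrite Hen2. replace (INR n * (K / INR n)) with K by (field; lra).
      assert (3 * (C1 + CV) / eps < K) by (unfold K; lra).
      apply Rmult_lt_reg_r with (K * 3 / eps); [apply Rdiv_lt_0_compat; lra|].
      replace ((C1 + CV) / K * (K * 3 / eps)) with (3 * (C1 + CV) / eps) by (field; split; lra).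
      replace (eps / 3 * 2 * (K * 3 / eps)) with (2 * K) by (field; lra). lra. }
    lra.
Qed.
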